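(* Assume the standing hypotheses (K), (F), (h), ($\theta$) of the context. Then: (1) There is $\varepsilon_0>0$ such that $\mathbf r\mapsto\mathcal F_{2\varepsilon}(\mathbf r)=F_1(r_1)+F_2(r_2)+2\varepsilon h(\mathbf r)$ is convex on $[0,\infty)^2$ for every $0<\varepsilon\le\varepsilon_0$, strictly convex if $\varepsilon<\varepsilon_0$. (2) For all $\mathbf r\in[0,\infty)^2$ and $0<\varepsilon\le\varepsilon_0$: $\tfrac12F_1(r_1)+\tfrac12F_2(r_2)\le\mathcal F_\varepsilon(\mathbf r)\le(1+\tfrac\varepsilon2\kappa_{1,1})F_1(r_1)+(1+\tfrac\varepsilon2\kappa_{2,2})F_2(r_2)$. (3) For $0\le r\le r_0$ and $j=1,2$: $\frac{m_j}{\beta_j+1}r^{\beta_j+1}\le F_j'(r)\le\frac{M_j}{\beta_j+1}r^{\beta_j+1}$ and $\frac{m_j}{(\beta_j+1)(\beta_j+2)}r^{\beta_j+2}\le F_j(r)\le\frac{M_j}{(\beta_j+1)(\beta_j+2)}r^{\beta_j+2}$. (4) For $j=1,2$ there are constants $\alpha_j$ such that $F_j'(r)\le\alpha_j(\min\{1,r\}+F_j(r))$ for all $r\ge0$. (5) For every $H>0$ there is $\beta_H>0$ such that for all $\bar{\mathbf r}\in[0,\infty)^2$ with $\bar r_1,\bar r_2\le H$, all $\mathbf r\in[0,\infty)^2$ and all $i,j\in\{1,2\}$, \[\max\{r_1,r_2\}\,|\theta_{j,i}(\mathbf u)-\theta_{j,i}(\bar{\mathbf u})|^2\le\beta_H\big(\mathrm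 d_{F_1}(r_1|\bar r_1)+\mathrm d_{F_2}(r_2|\bar r_2)\big),\] where $\mathbf u=(F_1'(r_1),F_2'(r_2))$, $\bar{\mathbf u}=(F_1'(\bar r_1),F_2'(\bar r_2))$ and $\mathrm d_F(r|\bar r):=F(r)-F(\bar r)-F'(\bar r)(r-\bar r)$ is the Bregman divergence of a convex function $F$.
   Context: Let $d\ge1$. Standing hypotheses. (K): $K:\mathbb R^d\to[0,\infty)$ is radially symmetric, $K(0)=0$, $K\in C^2$, $\nabla^2K\ge\lambda\,\mathrm{Id}$ for some $\lambda>0$, $\|\nabla^2K\|\le C_K$. (F): for $j=1,2$, $F_j:[0,\infty)\to[0,\infty)$ is $C^2$ with $F_j''(r)>0$ for $r>0$, $F_j(0)=F_j'(0)=0$, $\liminf_{r\to\infty}F_j''(r)>0$, $\limsup_{r\to\infty}F_j'(r)/F_j(r)<\infty$; there are $m_j,M_j>0$, $\beta_j\ge0$, $r_0>0$ with $m_jr^{\beta_j}\le F_j''(r)\le M_jr^{\beta_j}$ for $0\le r\le r_0$; and $F_j(r)-rF_j'(r)+r^2F_j''(r)\ge0$ for all $r\ge0$. (h): $h:[0,\infty)^2\to\mathbb R$ is $C^2$, and $h$ and $\partial_{r_1}h,\partial_{r_2}h$ vanish on $\{r_1=0\}\cup\{r_2=0\}$. Define for $\mathbf u\in[0,\infty)^2$: $\theta_j(\mathbf u):=\partial_{r_j}h((F_1')^{-1}(u_1),(F_2')^{-1}(u_2))$ and $\theta_{j,i}:=\partial_{u_i}\theta_j$, so $\theta_{j,i}(\mathbf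 u)=\partial_{r_i}\partial_{r_j}h(\mathbf r)/F_i''(r_i)$ with $r_k=(F_k')^{-1}(u_k)$. ($\theta$): each $\theta_{j,i}$ is locally Lipschitz on $[0,\infty)^2$, and there are $\kappa_{j,i}>0$ with $|\theta_{j,i}(\mathbf u)|\le\kappa_{j,i}\min\{1,u_1,u_2,\sqrt{(F_i')^{-1}(u_i)/(F_j')^{-1}(u_j)}\}$ for all $\mathbf u$. Notation: for $\varepsilon\ge0$, $\mathcal F_\varepsilon(\mathbf r):=F_1(r_1)+F_2(r_2)+\varepsilon h(\mathbf r)$. *)

(* Defs.v *)
From Stdlib Require Import Reals Lra ClassicalEpsilon.
From Coquelicot Require Import Coquelicot.
Open Scope R_scope.

Inductive idx : Type := I1 | I2.

Definition coord (i : idx) (p : R * R) : R :=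
  match i with I1 => fst p | I2 => snd p end.
Definition upd (i : idx) (p : R * R) (x : R) : R * R :=
  match i with I1 => (x, snd p) | I2 => (fst p, x) end.

Definition quad (p : R * R) : Prop := 0 <= fst p /\ 0 <= snd p.

Definition dist2 (p q : R * R) : R :=
  sqrt ((fst p - fst q) ^ 2 + (snd p - snd q) ^ 2).
Definition comb (t : R) (p q : R * R) : R * R :=
  (t * fst p + (1 - t) * fst q, t * snd p + (1 - t) * snd q).

(* Real power r^a for r >= 0, with the convention 0^a = 0 for a > 0, 0^0 = 1. *)
Definition pw (r a : R) : R :=
  if Rle_dec r 0 then (if Req_EM_T a 0 then 1 else 0) else Rpower r a.

(* Derivative of f at x relative to the set S (one-sided at boundary points):
   the difference quotient tends to l as y -> x, y in S, y <> x. *)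
Definition is_deriv_within (S : R -> Prop) (f : R -> R) (x l : R) : Prop :=
  filterlim (fun y => (f y - f x) / (y - x))
    (within (fun y => S y /\ y <> x) (locally x)) (locally l).

Definition nonneg (r : R) : Prop := 0 <= r.

Definition cont_nonneg (f : R -> R) (x : R) : Prop :=
  filterlim f (within nonneg (locally x)) (locally (f x)).
Definition cont_quad (g : R * R -> R) (p : R * R) : Prop :=
  filterlim g (within quad (locally p)) (locally (g p)).

Definition is_partial_quad (i : idx) (g : R * R -> R) (p : R * R) (l : R) : Prop :=
  is_deriv_within (fun x => quad (upd i p x)) (fun x => g (upd i p x)) (coord i p) l.

Definition loc_lipschitz_quad (g : R * R -> R) : Prop :=
  forall p, quad p -> exists delta L, 0 < delta /\
    forall v w, quad v -> quad w -> dist2 v p < delta -> dist2 w p < delta ->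
      Rabs (g v - g w) <= L * dist2 v w.

(* Inverse of a function on [0,oo): some r >= 0 with f r = u (unique when f is
   strictly increasing, as F_j' is). *)
Definition finv (f : R -> R) (u : R) : R :=
  epsilon (inhabits 0) (fun r => 0 <= r /\ f r = u).

Definition convex_quad (f : R * R -> R) : Prop :=
  forall p q t, quad p -> quad q -> 0 <= t <= 1 ->
    f (comb t p q) <= t * f p + (1 - t) * f q.
Definition strictly_convex_quad (f : R * R -> R) : Prop :=
  forall p q t, quad p -> quad q -> p <> q -> 0 < t < 1 ->
    f (comb t p q) < t * f p + (1 - t) * f q.

Definition HypF (F dF d2F : R -> R) (m M beta r0 : R) : Prop :=
  (forall r, 0 <= r -> is_deriv_within nonneg F r (dF r)) /\
  (forall r, 0 <= r -> is_deriv_within nonneg dF r (d2F r)) /\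
  (forall r, 0 <= r -> cont_nonneg d2F r) /\
  (forall r, 0 <= r -> 0 <= F r) /\
  (forall r, 0 < r -> 0 < d2F r) /\
  F 0 = 0 /\ dF 0 = 0 /\
  (* liminf_{r->oo} F''(r) > 0 *)
  (exists c R0, 0 < c /\ forall r, R0 <= r -> c <= d2F r) /\
  (* limsup_{r->oo} F'(r)/F(r) < oo *)
  (exists C R0, forall r, R0 <= r -> dF r / F r <= C) /\
  0 < m /\ 0 < M /\ 0 <= beta /\ 0 < r0 /\
  (forall r, 0 <= r <= r0 -> m * pw r beta <= d2F r <= M * pw r beta) /\
  (forall r, 0 <= r -> F r - r * dF r + r ^ 2 * d2F r >= 0).

Definition Hyph (h : R * R -> R) (dh : idx -> R * R -> R)
    (d2h : idx -> idx -> R * R -> R) : Prop :=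
  (forall i p, quad p -> is_partial_quad i h p (dh i p)) /\
  (forall i j p, quad p -> is_partial_quad i (dh j) p (d2h i j p)) /\
  (forall p, quad p -> cont_quad h p) /\
  (forall i p, quad p -> cont_quad (dh i) p) /\
  (forall i j p, quad p -> cont_quad (d2h i j) p) /\
  (forall p, quad p -> (fst p = 0 \/ snd p = 0) ->
     h p = 0 /\ dh I1 p = 0 /\ dh I2 p = 0).

Definition theta (dF : idx -> R -> R) (dh : idx -> R * R -> R) (j : idx)
    (u : R * R) : R :=
  dh j (finv (dF I1) (fst u), finv (dF I2) (snd u)).

Definition HypTheta (dF : idx -> R -> R) (dh : idx -> R * R -> R)
    (Th : idx -> idx -> R * R -> R) (kappa : idx -> idx -> R) : Prop :=
  (forall j i u, quad u -> is_partial_quad i (theta dF dh j) u (Th j i u)) /\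
  (forall j i, loc_lipschitz_quad (Th j i)) /\
  (forall j i, 0 < kappa j i) /\
  (forall j i u, quad u ->
     Rabs (Th j i u) <= kappa j i *
       Rmin (Rmin 1 (Rmin (fst u) (snd u)))
            (sqrt (finv (dF i) (coord i u) / finv (dF j) (coord j u)))).

Definition Feps (F : idx -> R -> R) (h : R * R -> R) (eps : R) (p : R * R) : R :=
  F I1 (fst p) + F I2 (snd p) + eps * h p.

Definition bregman (F dF : R -> R) (r rb : R) : R :=
  F r - F rb - dF rb * (r - rb).

(* Main.v *)
From Stdlib Require Import Reals Lra ClassicalEpsilon Classical List.
From Coquelicot Require Import Coquelicot.
Require Import Defs.
Open Scope R_scope.

Lemma dplus f g x a b : derivable_pt_lim f x a -> derivable_pt_lim g x b ->
  derivable_pt_lim (fun y => f y + g y) x (a + b).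
Proof. intros; now apply derivable_pt_lim_plus. Qed.
Lemma dminus f g x a b : derivable_pt_lim f x a -> derivable_pt_lim g x b ->
  derivable_pt_lim (fun y => f y - g y) x (a - b).
Proof. intros; now apply derivable_pt_lim_minus. Qed.
Lemma dmult f g x a b : derivable_pt_lim f x a -> derivable_pt_lim g x b ->
  derivable_pt_lim (fun y => f y * g y) x (a * g x + f x * b).
Proof. intros; now apply derivable_pt_lim_mult. Qed.
Lemma dscal c f x a : derivable_pt_lim f x a ->
  derivable_pt_lim (fun y => c * f y) x (c * a).
Proof. intros; now apply derivable_pt_lim_scal. Qed.
Lemma dconst c x : derivable_pt_lim (fun _ => c) x 0.
Proof. apply derivable_pt_lim_const. Qed.
Lemma did x : derivable_pt_lim (fun y => y) x 1.
Proof. apply derivable_pt_lim_id. Qed.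
Lemma dcomp f g x a b : derivable_pt_lim g x a -> derivable_pt_lim f (g x) b ->
  derivable_pt_lim (fun y => f (g y)) x (b * a).
Proof. intros; now apply (derivable_pt_lim_comp g f). Qed.
Lemma dval f x l l' : derivable_pt_lim f x l -> l = l' -> derivable_pt_lim f x l'.
Proof. intros; subst; auto. Qed.

Lemma dext f g x l : (exists d, 0 < d /\ forall y, Rabs (y - x) < d -> f y = g y) ->
  derivable_pt_lim g x l -> derivable_pt_lim f x l.
Proof.
  intros [d [Hd Hfg]] Hg eps Heps.
  destruct (Hg eps Heps) as [del Hdel].
  assert (Hm : 0 < Rmin d del) by (apply Rmin_pos; [lra| apply cond_pos]).
  exists (mkposreal _ Hm); intros h Hh Hh2; simpl in Hh2.
  rewrite (Hfg (x + h)), (Hfg x).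
  - apply Hdel; auto. apply Rlt_le_trans with (1 := Hh2), Rmin_r.
  - rewrite Rminus_diag, Rabs_R0; lra.
  - replace (x + h - x) with h by ring. apply Rlt_le_trans with (1 := Hh2), Rmin_l.
Qed.

Lemma ball_R (x e y : R) : ball x e y <-> Rabs (y - x) < e.
Proof. reflexivity. Qed.

Lemma deriv_within_eps S f x l : is_deriv_within S f x l ->
  forall eps, 0 < eps -> exists d, 0 < d /\ forall y, S y -> y <> x -> Rabs (y - x) < d ->
    Rabs ((f y - f x) / (y - x) - l) < eps.
Proof.
  intros H eps Heps.
  destruct (proj1 (filterlim_locally _ _) H (mkposreal _ Heps)) as [d Hd].
  exists d; split; [apply cond_pos|]. intros y Sy Ny Hy.
  apply (Hd y); [exact Hy| split; auto].
Qed.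

Lemma deriv_within_cont S f x l : is_deriv_within S f x l ->
  forall eps, 0 < eps -> exists d, 0 < d /\ forall y, S y -> Rabs (y - x) < d ->
    Rabs (f y - f x) < eps.
Proof.
  intros H eps Heps.
  destruct (deriv_within_eps S f x l H 1 Rlt_0_1) as [d1 [Hd1 H1]].
  set (d := Rmin d1 (eps / (Rabs l + 1))).
  assert (Hd : 0 < d). { apply Rmin_pos; auto. apply Rdiv_lt_0_compat; auto.
    pose proof (Rabs_pos l); lra. }
  exists d; split; auto. intros y Sy Hy.
  destruct (Req_dec y x) as [E|E]. { subst. rewrite Rminus_diag, Rabs_R0; lra. }
  assert (Hy1 : Rabs (y - x) < d1) by (apply Rlt_le_trans with (1:=Hy); apply Rmin_l).
  specialize (H1 y Sy E Hy1).
  assert (Hne : y - x <> 0) by lra.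
  replace (f y - f x) with (((f y - f x) / (y - x)) * (y - x)) by (field; auto).
  rewrite Rabs_mult.
  assert (Hq : Rabs ((f y - f x) / (y - x)) < Rabs l + 1).
  { pose proof (Rabs_triang_inv ((f y - f x) / (y - x)) l). lra. }
  assert (Hy2 : Rabs (y - x) < eps / (Rabs l + 1)) by (apply Rlt_le_trans with (1:=Hy); apply Rmin_r).
  assert (HL : 0 < Rabs l + 1) by (pose proof (Rabs_pos l); lra).
  apply Rle_lt_trans with ((Rabs l + 1) * Rabs (y - x)).
  - apply Rmult_le_compat_r; [apply Rabs_pos| lra].
  - apply Rmult_lt_reg_l with (/ (Rabs l + 1)). apply Rinv_0_lt_compat; auto.
    rewrite <- Rmult_assoc, Rinv_l, Rmult_1_l by lra.
    rewrite Rmult_comm; exact Hy2.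
Qed.

Lemma deriv_within_interior S f x l :
  (exists d, 0 < d /\ forall y, Rabs (y - x) < d -> S y) ->
  is_deriv_within S f x l -> derivable_pt_lim f x l.
Proof.
  intros [d [Hd HS]] H eps Heps.
  destruct (deriv_within_eps S f x l H eps Heps) as [d1 [Hd1 H1]].
  assert (Hm : 0 < Rmin d d1) by (apply Rmin_pos; auto).
  exists (mkposreal _ Hm). intros h Hh Hh2; simpl in Hh2.
  assert (E : x + h - x = h) by ring.
  replace ((f (x + h) - f x) / h) with ((f (x + h) - f x) / (x + h - x)) by (rewrite E; auto).
  apply H1.
  - apply HS. rewrite E. apply Rlt_le_trans with (1 := Hh2), Rmin_l.
  - intro C. apply Hh. lra.
  - rewrite E. apply Rlt_le_trans with (1 := Hh2), Rmin_r.
Qed.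

Lemma dpl_cont f x l : derivable_pt_lim f x l ->
  forall eps, 0 < eps -> exists d, 0 < d /\ forall y, Rabs (y - x) < d -> Rabs (f y - f x) < eps.
Proof.
  intros H eps Heps.
  assert (C : continuity_pt f x).
  { apply derivable_continuous_pt. exists l. exact H. }
  destruct (C eps Heps) as [d [Hd Hd2]].
  exists d; split; auto. intros y Hy.
  destruct (Req_dec y x) as [E|E]. { subst. rewrite Rminus_diag, Rabs_R0; lra. }
  apply (Hd2 y); split; [split; [exact I| intro; apply E; auto] | exact Hy].
Qed.

Definition rcont (f : R -> R) (a : R) : Prop :=
  forall eps, 0 < eps -> exists d, 0 < d /\ forall y, a <= y -> y - a < d -> Rabs (f y - f a) < eps.

Lemma mono_le f f' a b : a <= b ->
  (forall x, a < x <= b -> derivable_pt_lim f x (f' x)) ->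
  (forall x, a < x < b -> 0 <= f' x) -> rcont f a -> f a <= f b.
Proof.
  intros Hab Hd Hp Hr.
  destruct (Req_dec a b) as [E|E]. { subst; lra. }
  apply Rnot_lt_le; intro C.
  destruct (Hr ((f a - f b)/2)) as [d [Hd0 Hd1]]. lra.
  set (a' := a + Rmin d (b - a) / 2).
  assert (Hm : 0 < Rmin d (b - a)) by (apply Rmin_pos; lra).
  assert (H1 : Rmin d (b - a) <= d) by apply Rmin_l.
  assert (H2 : Rmin d (b - a) <= b - a) by apply Rmin_r.
  assert (Ha1 : a < a') by (unfold a'; lra).
  assert (Ha2 : a' < b) by (unfold a'; lra).
  specialize (Hd1 a'). assert (Hx : Rabs (f a' - f a) < (f a - f b) / 2) by (apply Hd1; unfold a'; lra).
  destruct (MVT_cor2 f f' a' b Ha2) as [c [Hc1 Hc2]].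
  { intros c Hc. apply Hd. lra. }
  assert (0 <= f' c) by (apply Hp; lra).
  assert (0 <= f' c * (b - a')) by (apply Rmult_le_pos; lra).
  apply Rabs_def2 in Hx. lra.
Qed.

Lemma mono_lt f f' a b : a < b ->
  (forall x, a < x <= b -> derivable_pt_lim f x (f' x)) ->
  (forall x, a < x < b -> 0 < f' x) -> rcont f a -> f a < f b.
Proof.
  intros Hab Hd Hp Hr.
  set (m := (a + b) / 2).
  assert (H1 : f a <= f m).
  { apply (mono_le f f'); unfold m; try lra.
    - intros x Hx; apply Hd; lra.
    - intros x Hx; left; apply Hp; lra.
    - exact Hr. }
  destruct (MVT_cor2 f f' m b) as [c [Hc1 Hc2]]. unfold m; lra.
  { intros c Hc. apply Hd. unfold m in Hc. lra. }
  assert (0 < f' c) by (apply Hp; unfold m in Hc2; lra).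
  assert (0 < f' c * (b - m)) by (apply Rmult_lt_0_compat; unfold m in *; lra).
  lra.
Qed.

Lemma rcont_of_dpl f a l : derivable_pt_lim f a l -> rcont f a.
Proof.
  intros H eps Heps. destruct (dpl_cont f a l H eps Heps) as [d [Hd H1]].
  exists d; split; auto; intros y Hy1 Hy2. apply H1. rewrite Rabs_right; lra.
Qed.

Lemma rcont_plus f g a : rcont f a -> rcont g a -> rcont (fun y => f y + g y) a.
Proof.
  intros Hf Hg eps Heps.
  destruct (Hf (eps/2)) as [d1 [Hd1 H1]]; [lra|].
  destruct (Hg (eps/2)) as [d2 [Hd2 H2]]; [lra|].
  exists (Rmin d1 d2); split; [apply Rmin_pos; auto|]. intros y Hy Hy2.
  assert (y - a < d1) by (apply Rlt_le_trans with (1:=Hy2), Rmin_l).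
  assert (y - a < d2) by (apply Rlt_le_trans with (1:=Hy2), Rmin_r).
  specialize (H1 y Hy H). specialize (H2 y Hy H0).
  replace (f y + g y - (f a + g a)) with ((f y - f a) + (g y - g a)) by ring.
  pose proof (Rabs_triang (f y - f a) (g y - g a)). lra.
Qed.

Lemma rcont_scal c f a : rcont f a -> rcont (fun y => c * f y) a.
Proof.
  intros Hf eps Heps.
  destruct (Hf (eps / (Rabs c + 1))) as [d [Hd H1]].
  { apply Rdiv_lt_0_compat; auto. pose proof (Rabs_pos c); lra. }
  exists d; split; auto; intros y Hy Hy2. specialize (H1 y Hy Hy2).
  replace (c * f y - c * f a) with (c * (f y - f a)) by ring. rewrite Rabs_mult.
  assert (HL : 0 < Rabs c + 1) by (pose proof (Rabs_pos c); lra).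
  apply Rle_lt_trans with ((Rabs c + 1) * Rabs (f y - f a)).
  - apply Rmult_le_compat_r; [apply Rabs_pos| lra].
  - apply Rmult_lt_reg_l with (/ (Rabs c + 1)). apply Rinv_0_lt_compat; auto.
    rewrite <- Rmult_assoc, Rinv_l, Rmult_1_l by lra. rewrite Rmult_comm. exact H1.
Qed.

Lemma rcont_minus f g a : rcont f a -> rcont g a -> rcont (fun y => f y - g y) a.
Proof.
  intros Hf Hg. assert (H := rcont_plus f (fun y => -1 * g y) a Hf (rcont_scal (-1) g a Hg)).
  intros eps Heps. destruct (H eps Heps) as [d [Hd H1]]. exists d; split; auto.
  intros y Hy Hy2. specialize (H1 y Hy Hy2).
  replace (f y - g y - (f a - g a)) with (f y + -1 * g y - (f a + -1 * g a)) by ring. auto.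
Qed.

Lemma rcont_const c a : rcont (fun _ => c) a.
Proof. intros eps Heps. exists 1; split; [lra|]. intros. rewrite Rminus_diag, Rabs_R0; lra. Qed.
Lemma rcont_id a : rcont (fun y => y) a.
Proof. intros eps Heps. exists eps; split; auto. intros. rewrite Rabs_right; lra. Qed.

Lemma rcont_mult f g a : rcont f a -> rcont g a -> rcont (fun y => f y * g y) a.
Proof.
  intros Hf Hg eps Heps.
  set (K := Rabs (f a) + Rabs (g a) + 1).
  assert (HK : 0 < K) by (unfold K; pose proof (Rabs_pos (f a)); pose proof (Rabs_pos (g a)); lra).
  set (e := Rmin 1 (eps / (2 * K))).
  assert (He : 0 < e) by (apply Rmin_pos; [lra| apply Rdiv_lt_0_compat; lra]).
  destruct (Hf e He) as [d1 [Hd1 H1]]. destruct (Hg e He) as [d2 [Hd2 H2]].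
  exists (Rmin d1 d2); split; [apply Rmin_pos; auto|]. intros y Hy Hy2.
  assert (y - a < d1) by (apply Rlt_le_trans with (1:=Hy2), Rmin_l).
  assert (y - a < d2) by (apply Rlt_le_trans with (1:=Hy2), Rmin_r).
  specialize (H1 y Hy H). specialize (H2 y Hy H0).
  assert (e <= 1) by apply Rmin_l. assert (e <= eps / (2*K)) by apply Rmin_r.
  replace (f y * g y - f a * g a) with ((f y - f a) * (g y - g a) + (f y - f a) * g a + f a * (g y - g a)) by ring.
  eapply Rle_lt_trans. apply Rabs_triang. eapply Rle_lt_trans. apply Rplus_le_compat_r, Rabs_triang.
  rewrite !Rabs_mult.
  assert (Rabs (f y - f a) * Rabs (g y - g a) <= e * 1).
  { apply Rmult_le_compat; try apply Rabs_pos; lra. }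
  assert (Rabs (f y - f a) * Rabs (g a) <= e * Rabs (g a)).
  { apply Rmult_le_compat_r; [apply Rabs_pos| lra]. }
  assert (Rabs (f a) * Rabs (g y - g a) <= Rabs (f a) * e).
  { apply Rmult_le_compat_l; [apply Rabs_pos| lra]. }
  assert (e * K <= eps / 2).
  { apply Rle_trans with (eps / (2 * K) * K). apply Rmult_le_compat_r; lra.
    right; field; lra. }
  unfold K in *. pose proof (Rabs_pos (f a)); pose proof (Rabs_pos (g a)). nra.
Qed.

Ltac rc := repeat first [ apply rcont_minus | apply rcont_plus | apply rcont_mult
  | apply rcont_const | apply rcont_id ].
Ltac dd := eapply dval; [repeat first [ apply dminus | apply dplus | apply dmult | apply dconst | apply did ] | cbv beta ].

Lemma nonneg_int x : 0 < x -> exists d, 0 < d /\ forall y, Rabs (y - x) < d -> nonneg y.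
Proof. intros Hx; exists x; split; auto; intros y Hy. unfold nonneg. apply Rabs_def2 in Hy. lra. Qed.


Lemma HF_dF F dF d2F m M beta r0 : HypF F dF d2F m M beta r0 ->
  forall r, 0 < r -> derivable_pt_lim F r (dF r).
Proof.
  intros HF r Hr. destruct HF as [H1 _].
  apply (deriv_within_interior nonneg); [apply nonneg_int; auto| apply H1; lra].
Qed.

Lemma HF_d2F F dF d2F m M beta r0 : HypF F dF d2F m M beta r0 ->
  forall r, 0 < r -> derivable_pt_lim dF r (d2F r).
Proof.
  intros HF r Hr. destruct HF as [_ [H1 _]].
  apply (deriv_within_interior nonneg); [apply nonneg_int; auto| apply H1; lra].
Qed.

Lemma within_rcont S f a l : (forall y, a <= y -> S y) -> is_deriv_within S f a l -> rcont f a.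
Proof.
  intros HS H eps Heps. destruct (deriv_within_cont S f a l H eps Heps) as [d [Hd H1]].
  exists d; split; auto. intros y Hy Hy2. apply H1; auto. rewrite Rabs_right; lra.
Qed.

Lemma HF_rcF F dF d2F m M beta r0 : HypF F dF d2F m M beta r0 ->
  forall a, 0 <= a -> rcont F a.
Proof.
  intros HF a Ha. destruct HF as [H1 _].
  apply (within_rcont nonneg F a (dF a)); [intros; unfold nonneg; lra| apply H1; auto].
Qed.

Lemma HF_rcdF F dF d2F m M beta r0 : HypF F dF d2F m M beta r0 ->
  forall a, 0 <= a -> rcont dF a.
Proof.
  intros HF a Ha. destruct HF as [_ [H1 _]].
  apply (within_rcont nonneg dF a (d2F a)); [intros; unfold nonneg; lra| apply H1; auto].
Qed.

Lemma HF_d2pos F dF d2F m M beta r0 : HypF F dF d2F m M beta r0 ->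
  forall r, 0 < r -> 0 < d2F r.
Proof. intros HF. apply HF. Qed.

Lemma HF_F0 F dF d2F m M beta r0 : HypF F dF d2F m M beta r0 -> F 0 = 0 /\ dF 0 = 0.
Proof. intros HF. split; apply HF. Qed.

Lemma HF_Fnn F dF d2F m M beta r0 : HypF F dF d2F m M beta r0 -> forall r, 0 <= r -> 0 <= F r.
Proof. intros HF. apply HF. Qed.

Lemma HF_dF_lt F dF d2F m M beta r0 : HypF F dF d2F m M beta r0 ->
  forall a b, 0 <= a < b -> dF a < dF b.
Proof.
  intros HF a b Hab. apply (mono_lt dF d2F a b); try lra.
  - intros x Hx; apply (HF_d2F F dF d2F m M beta r0 HF); lra.
  - intros x Hx; apply (HF_d2pos F dF d2F m M beta r0 HF); lra.
  - apply (HF_rcdF F dF d2F m M beta r0 HF); lra.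
Qed.

Lemma HF_dF_le F dF d2F m M beta r0 : HypF F dF d2F m M beta r0 ->
  forall a b, 0 <= a <= b -> dF a <= dF b.
Proof.
  intros HF a b Hab. destruct (Req_dec a b); [subst; lra|].
  left; apply (HF_dF_lt F dF d2F m M beta r0 HF); lra.
Qed.

Lemma HF_dFpos F dF d2F m M beta r0 : HypF F dF d2F m M beta r0 ->
  forall r, 0 < r -> 0 < dF r.
Proof.
  intros HF r Hr. destruct (HF_F0 _ _ _ _ _ _ _ HF) as [_ E].
  rewrite <- E. apply (HF_dF_lt F dF d2F m M beta r0 HF); lra.
Qed.

Lemma HF_dFnn F dF d2F m M beta r0 : HypF F dF d2F m M beta r0 ->
  forall r, 0 <= r -> 0 <= dF r.
Proof.
  intros HF r Hr. destruct (HF_F0 _ _ _ _ _ _ _ HF) as [_ E].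
  rewrite <- E. apply (HF_dF_le F dF d2F m M beta r0 HF); lra.
Qed.

Lemma HF_Fpos F dF d2F m M beta r0 : HypF F dF d2F m M beta r0 ->
  forall r, 0 < r -> 0 < F r.
Proof.
  intros HF r Hr. destruct (HF_F0 _ _ _ _ _ _ _ HF) as [E _].
  rewrite <- E. apply (mono_lt F dF 0 r); try lra.
  - intros x Hx; apply (HF_dF F dF d2F m M beta r0 HF); lra.
  - intros x Hx; apply (HF_dFpos F dF d2F m M beta r0 HF); lra.
  - apply (HF_rcF F dF d2F m M beta r0 HF); lra.
Qed.

Lemma HF_F_le F dF d2F m M beta r0 : HypF F dF d2F m M beta r0 ->
  forall a b, 0 <= a <= b -> F a <= F b.
Proof.
  intros HF a b Hab. apply (mono_le F dF a b); try lra.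
  - intros x Hx; apply (HF_dF F dF d2F m M beta r0 HF); lra.
  - intros x Hx; apply (HF_dFnn F dF d2F m M beta r0 HF); lra.
  - apply (HF_rcF F dF d2F m M beta r0 HF); lra.
Qed.

Lemma HF_dF_inj F dF d2F m M beta r0 : HypF F dF d2F m M beta r0 ->
  forall a b, 0 <= a -> 0 <= b -> dF a = dF b -> a = b.
Proof.
  intros HF a b Ha Hb E. destruct (Rtotal_order a b) as [C|[C|C]]; auto.
  - pose proof (HF_dF_lt F dF d2F m M beta r0 HF a b); lra.
  - pose proof (HF_dF_lt F dF d2F m M beta r0 HF b a); lra.
Qed.

Lemma finv_dF F dF d2F m M beta r0 : HypF F dF d2F m M beta r0 ->
  forall r, 0 <= r -> finv dF (dF r) = r.
Proof.
  intros HF r Hr. unfold finv.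
  destruct (epsilon_spec (inhabits 0) (fun x => 0 <= x /\ dF x = dF r)) as [H1 H2].
  { exists r; auto. }
  apply (HF_dF_inj F dF d2F m M beta r0 HF); auto.
Qed.

Lemma breg_nn F dF d2F m M beta r0 : HypF F dF d2F m M beta r0 ->
  forall r rb, 0 <= r -> 0 <= rb -> 0 <= bregman F dF r rb.
Proof.
  intros HF r rb Hr Hrb. unfold bregman.
  pose proof (HF_dF F dF d2F m M beta r0 HF) as Hd.
  pose proof (HF_rcF F dF d2F m M beta r0 HF) as Hc.
  destruct (Rle_or_lt rb r).
  - pose proof (mono_le (fun x => F x - F rb - dF rb * (x - rb)) (fun x => dF x - dF rb) rb r H).
    simpl in H0. replace (F rb - F rb - dF rb * (rb - rb)) with 0 in H0 by ring.
    apply H0.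
    + intros x Hx. dd; first [apply Hd; lra | ring | idtac].
    + intros y Hy. pose proof (HF_dF_le F dF d2F m M beta r0 HF rb y). lra.
    + rc. apply Hc; lra.
  - pose proof (mono_le (fun x => dF rb * (x - rb) - (F x - F rb)) (fun x => dF rb - dF x) r rb).
    simpl in H0. replace (dF rb * (rb - rb) - (F rb - F rb)) with 0 in H0 by ring.
    enough (dF rb * (r - rb) - (F r - F rb) <= 0) by lra.
    apply H0; [lra| | |].
    + intros x Hx. dd; first [apply Hd; lra | ring | idtac].
    + intros y Hy. pose proof (HF_dF_le F dF d2F m M beta r0 HF y rb). lra.
    + rc. apply Hc; lra.
Qed.

Lemma pw_pos_eq r a : 0 < r -> pw r a = Rpower r a.
Proof. intros H. unfold pw. destruct (Rle_dec r 0); [lra| auto]. Qed.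

Lemma pw_0 a : a <> 0 -> pw 0 a = 0.
Proof. intros H. unfold pw. destruct (Rle_dec 0 0); [|lra]. destruct (Req_EM_T a 0); [lra|auto]. Qed.

Lemma pw_nn r a : 0 <= pw r a.
Proof. unfold pw. destruct (Rle_dec r 0). destruct (Req_EM_T a 0); lra. unfold Rpower; left; apply exp_pos. Qed.

Lemma pw_d a x : 0 < x -> derivable_pt_lim (fun r => pw r a) x (a * Rpower x (a - 1)).
Proof.
  intros Hx. apply dext with (g := fun r => Rpower r a).
  - exists x; split; auto. intros y Hy. apply Rabs_def2 in Hy. apply pw_pos_eq; lra.
  - apply derivable_pt_lim_power; auto.
Qed.

Lemma pw_rcont0 a : 0 < a -> rcont (fun r => pw r a) 0.
Proof.
  intros Ha eps Heps. exists (Rpower eps (/ a)). split. unfold Rpower; apply exp_pos.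
  intros y Hy1 Hy2. rewrite pw_0 by lra. rewrite Rminus_0_r in *.
  destruct (Req_dec y 0) as [E|E]. { subst. rewrite pw_0 by lra. rewrite Rabs_R0; auto. }
  rewrite pw_pos_eq by lra. rewrite Rabs_right by (unfold Rpower; left; apply exp_pos).
  replace eps with (Rpower (Rpower eps (/ a)) a).
  - apply Rlt_Rpower_l; auto. lra.
  - rewrite Rpower_mult. rewrite Rinv_l by lra. apply Rpower_1; auto.
Qed.

Lemma int_cmp f fd s c a r : 0 <= a -> 0 < r ->
  (forall x, 0 < x <= r -> derivable_pt_lim f x (fd x)) -> rcont f 0 -> f 0 = 0 ->
  (forall x, 0 < x < r -> 0 <= s * (fd x - c * pw x a)) ->
  0 <= s * (f r - c / (a + 1) * pw r (a + 1)).
Proof.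
  intros Ha Hr Hd Hc H0 Hp.
  pose proof (mono_le (fun x => s * (f x - c / (a + 1) * pw x (a + 1)))
     (fun x => s * (fd x - c * pw x a)) 0 r) as H.
  simpl in H. rewrite H0, pw_0 in H by lra. replace (s * (0 - c / (a + 1) * 0)) with 0 in H by ring.
  apply H; [lra| | auto | ].
  - intros x Hx. eapply dval. apply dscal. apply dminus. apply Hd; auto.
    apply dscal. apply pw_d. lra.
    rewrite pw_pos_eq by lra. replace (a + 1 - 1) with a by ring. field. lra.
  - apply rcont_scal. apply rcont_minus; auto. apply rcont_scal. apply pw_rcont0. lra.
Qed.

Lemma part3 F dF d2F m M b r0 : HypF F dF d2F m M b r0 ->
  forall r, 0 <= r <= r0 ->
     m / (b + 1) * pw r (b + 1) <= dF r <= M / (b + 1) * pw r (b + 1) /\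
     m / ((b + 1) * (b + 2)) * pw r (b + 2) <= F r <= M / ((b + 1) * (b + 2)) * pw r (b + 2).
Proof.
  intros HF r Hr.
  assert (Hb : 0 <= b) by apply HF.
  destruct (HF_F0 _ _ _ _ _ _ _ HF) as [F0 dF0].
  destruct (Req_dec r 0) as [E|E].
  { subst. rewrite !pw_0 by lra. rewrite F0, dF0. lra. }
  assert (Hbnd : forall x, 0 < x <= r0 -> m * pw x b <= d2F x <= M * pw x b).
  { intros x Hx. apply HF. lra. }
  assert (HdF : forall s c, (forall x, 0 < x <= r0 -> 0 <= s * (d2F x - c * pw x b)) ->
     forall y, 0 < y <= r0 -> 0 <= s * (dF y - c / (b + 1) * pw y (b + 1))).
  { intros s c Hs y Hy. apply (int_cmp dF d2F s c b y); auto; try lra.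
    - intros x Hx; apply (HF_d2F F dF d2F m M b r0 HF); lra.
    - apply (HF_rcdF F dF d2F m M b r0 HF); lra.
    - intros x Hx. apply Hs; lra. }
  assert (L1 : forall y, 0 < y <= r0 -> 0 <= 1 * (dF y - m / (b + 1) * pw y (b + 1))).
  { apply HdF. intros x Hx. pose proof (Hbnd x Hx). lra. }
  assert (L2 : forall y, 0 < y <= r0 -> 0 <= -1 * (dF y - M / (b + 1) * pw y (b + 1))).
  { apply HdF. intros x Hx. pose proof (Hbnd x Hx). lra. }
  assert (HFc : forall s c, (forall x, 0 < x <= r0 -> 0 <= s * (dF x - c * pw x (b + 1))) ->
     0 <= s * (F r - c / (b + 1 + 1) * pw r (b + 1 + 1))).
  { intros s c Hs. apply (int_cmp F dF s c (b + 1) r); auto; try lra.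
    - intros x Hx; apply (HF_dF F dF d2F m M b r0 HF); lra.
    - apply (HF_rcF F dF d2F m M b r0 HF); lra.
    - intros x Hx. apply Hs; lra. }
  assert (L3 := HFc 1 (m / (b + 1)) L1).
  assert (L4 := HFc (-1) (M / (b + 1)) L2).
  replace (b + 1 + 1) with (b + 2) in L3, L4 by ring.
  replace (m / (b + 1) / (b + 2)) with (m / ((b + 1) * (b + 2))) in L3 by (field; lra).
  replace (M / (b + 1) / (b + 2)) with (M / ((b + 1) * (b + 2))) in L4 by (field; lra).
  specialize (L1 r ltac:(lra)). specialize (L2 r ltac:(lra)).
  lra.
Qed.

Lemma part4 F dF d2F m M b r0 : HypF F dF d2F m M b r0 ->
  exists alpha, forall r, 0 <= r -> dF r <= alpha * (Rmin 1 r + F r).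
Proof.
  intros HF.
  assert (Hb : 0 <= b) by apply HF.
  assert (Hr0 : 0 < r0) by apply HF.
  assert (HM : 0 < M) by apply HF.
  destruct (HF_F0 _ _ _ _ _ _ _ HF) as [F0 dF0].
  assert (Hlim : exists C R0, forall r, R0 <= r -> dF r / F r <= C) by apply HF.
  destruct Hlim as [C [R0 HC]].
  set (K := M * Rpower r0 b).
  assert (HK0 : 0 <= K) by (unfold K, Rpower; pose proof (exp_pos (b * ln r0)); nra).
  assert (HK : forall x, 0 < x <= r0 -> d2F x <= K).
  { intros x Hx. assert (m * pw x b <= d2F x <= M * pw x b) by (apply HF; lra).
    rewrite pw_pos_eq in H by lra. unfold K.
    assert (Rpower x b <= Rpower r0 b) by (apply Rle_Rpower_l; lra). nra. }
  set (r1 := Rmin r0 1).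
  assert (Hr1 : 0 < r1) by (apply Rmin_pos; lra).
  assert (Hr1a : r1 <= r0) by apply Rmin_l. assert (Hr1b : r1 <= 1) by apply Rmin_r.
  assert (Hsmall : forall r, 0 <= r <= r1 -> dF r <= K * r).
  { intros r Hr. pose proof (mono_le (fun x => K * x - dF x) (fun x => K - d2F x) 0 r) as H.
    simpl in H. rewrite dF0 in H. enough (0 <= K * r - dF r) by lra.
    replace 0 with (K * 0 - 0) at 1 by ring. apply H; [lra| | |].
    - intros x Hx. eapply dval. apply dminus. apply dscal. apply did.
      apply (HF_d2F F dF d2F m M b r0 HF); lra. ring.
    - intros x Hx. pose proof (HK x ltac:(lra)). lra.
    - apply rcont_minus. apply rcont_scal, rcont_id. apply (HF_rcdF F dF d2F m M b r0 HF); lra. }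
  set (R1 := Rmax R0 1).
  assert (HR1a : R0 <= R1) by apply Rmax_l. assert (HR1b : 1 <= R1) by apply Rmax_r.
  assert (HdR1 : 0 <= dF R1) by (apply (HF_dFnn F dF d2F m M b r0 HF); lra).
  exists (K + dF R1 / r1 + Rabs C).
  intros r Hr.
  assert (HFr : 0 <= F r) by (apply (HF_Fnn F dF d2F m M b r0 HF); lra).
  assert (HdFr : 0 <= dF r) by (apply (HF_dFnn F dF d2F m M b r0 HF); lra).
  assert (Hq : 0 <= dF R1 / r1) by (apply Rdiv_le_0_compat; lra).
  assert (HC0 : 0 <= Rabs C) by apply Rabs_pos.
  assert (Hmin0 : 0 <= Rmin 1 r) by (apply Rmin_glb; lra).
  destruct (Rle_or_lt r r1) as [H1|H1].
  - assert (Rmin 1 r = r) by (apply Rmin_right; lra).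
    pose proof (Hsmall r ltac:(lra)). rewrite H. nra.
  - destruct (Rle_or_lt r R1) as [H2|H2].
    + assert (dF r <= dF R1) by (apply (HF_dF_le F dF d2F m M b r0 HF); lra).
      assert (r1 <= Rmin 1 r) by (apply Rmin_glb; lra).
      assert (dF R1 <= dF R1 / r1 * Rmin 1 r).
      { apply Rle_trans with (dF R1 / r1 * r1). right; field; lra.
        apply Rmult_le_compat_l; lra. }
      nra.
    + assert (HFp : 0 < F r) by (apply (HF_Fpos F dF d2F m M b r0 HF); lra).
      pose proof (HC r ltac:(lra)).
      assert (dF r <= C * F r).
      { apply Rle_trans with (dF r / F r * F r). right; field; lra.
        apply Rmult_le_compat_r; lra. }
      pose proof (Rle_abs C). nra.
Qed.

Lemma absle x a : Rabs x <= a -> -a <= x <= a.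
Proof. unfold Rabs; destruct (Rcase_abs x); lra. Qed.
Lemma absle2 x a : -a <= x <= a -> Rabs x <= a.
Proof. unfold Rabs; destruct (Rcase_abs x); lra. Qed.

Definition U (dF : idx -> R -> R) (q : R * R) : R * R := (dF I1 (fst q), dF I2 (snd q)).

Lemma cont_quad_eps g P : cont_quad g P ->
  forall eps, 0 < eps -> exists d, 0 < d /\ forall q, quad q ->
    Rabs (fst q - fst P) < d -> Rabs (snd q - snd P) < d -> Rabs (g q - g P) < eps.
Proof.
  intros H eps Heps.
  destruct (proj1 (filterlim_locally _ _) H (mkposreal _ Heps)) as [d Hd].
  exists d; split; [apply cond_pos|]. intros q Hq H1 H2.
  apply (Hd q); [split; [exact H1| exact H2]| exact Hq].
Qed.

Lemma upd_upd i p x y : upd i (upd i p x) y = upd i p y.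
Proof. destruct i; reflexivity. Qed.
Lemma coord_upd i p x : coord i (upd i p x) = x.
Proof. destruct i; reflexivity. Qed.
Lemma upd_coord i p : upd i p (coord i p) = p.
Proof. destruct i, p; reflexivity. Qed.
Lemma quad_upd i p x : quad p -> 0 <= x -> quad (upd i p x).
Proof. intros [H1 H2] Hx. destruct i; split; simpl; auto. Qed.
Lemma quad_coord i p : quad p -> 0 <= coord i p.
Proof. intros [H1 H2]. destruct i; simpl; auto. Qed.
Lemma U_upd dF i p x : U dF (upd i p x) = upd i (U dF p) (dF i x).
Proof. destruct i; reflexivity. Qed.
Lemma axis_upd i p : fst (upd i p 0) = 0 \/ snd (upd i p 0) = 0.
Proof. destruct i; simpl; auto. Qed.

Lemma cont_line g i p a : quad p -> 0 <= a -> cont_quad g (upd i p a) ->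
  rcont (fun x => g (upd i p x)) a.
Proof.
  intros Hp Ha Hc eps Heps. destruct (cont_quad_eps _ _ Hc eps Heps) as [d [Hd H]].
  exists d; split; auto. intros y Hy1 Hy2. apply H.
  - apply quad_upd; auto; lra.
  - destruct i; simpl; [rewrite Rabs_right; lra| rewrite Rminus_diag, Rabs_R0; lra].
  - destruct i; simpl; [rewrite Rminus_diag, Rabs_R0; lra| rewrite Rabs_right; lra].
Qed.

Lemma partial_interior i g p l : quad p -> 0 < coord i p -> is_partial_quad i g p l ->
  derivable_pt_lim (fun x => g (upd i p x)) (coord i p) l.
Proof.
  intros Hp Hc H. apply (deriv_within_interior (fun x => quad (upd i p x))); auto.
  exists (coord i p); split; auto. intros y Hy. apply quad_upd; auto.
  apply Rabs_def2 in Hy. lra.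
Qed.

Lemma partial_line i g p s l : quad p -> 0 < s -> is_partial_quad i g (upd i p s) l ->
  derivable_pt_lim (fun x => g (upd i p x)) s l.
Proof.
  intros Hp Hs H. pose proof (partial_interior i g (upd i p s) l) as H1.
  rewrite coord_upd in H1.
  apply dext with (g := fun x => g (upd i (upd i p s) x)).
  - exists 1; split; [lra|]. intros; rewrite upd_upd; auto.
  - apply H1; auto. apply quad_upd; auto; lra.
Qed.

Lemma theta_U F dF d2F m M beta r0 dh j q :
  (forall j, HypF (F j) (dF j) (d2F j) (m j) (M j) (beta j) r0) -> quad q ->
  theta dF dh j (U dF q) = dh j q.
Proof.
  intros HF [H1 H2]. unfold theta, U; simpl.
  rewrite (finv_dF _ _ _ _ _ _ _ (HF I1)), (finv_dF _ _ _ _ _ _ _ (HF I2)) by auto.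
  destruct q; reflexivity.
Qed.

Lemma quad_U F dF d2F m M beta r0 q :
  (forall j, HypF (F j) (dF j) (d2F j) (m j) (M j) (beta j) r0) -> quad q -> quad (U dF q).
Proof.
  intros HF [H1 H2]. split; simpl; eapply HF_dFnn; eauto.
Qed.

Lemma chain F dF d2F m M beta r0 dh Th kappa i j p s :
  (forall j, HypF (F j) (dF j) (d2F j) (m j) (M j) (beta j) r0) ->
  HypTheta dF dh Th kappa -> quad p -> 0 < s ->
  derivable_pt_lim (fun x => dh j (upd i p x)) s (Th j i (U dF (upd i p s)) * d2F i s).
Proof.
  intros HF HT Hp Hs.
  set (u := U dF p).
  assert (Hu : quad u) by (eapply quad_U; eauto).
  apply dext with (g := fun x => theta dF dh j (upd i u (dF i x))).
  - exists s; split; auto. intros y Hy. apply Rabs_def2 in Hy.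
    unfold u. rewrite <- U_upd. erewrite theta_U; eauto. apply quad_upd; auto; lra.
  - apply dcomp with (g := dF i) (f := fun y => theta dF dh j (upd i u y)).
    + apply (HF_d2F _ _ _ _ _ _ _ (HF i)); auto.
    + rewrite U_upd. fold u.
      assert (Hpos : 0 < dF i s) by (apply (HF_dFpos _ _ _ _ _ _ _ (HF i)); auto).
      apply partial_line; auto. apply HT. apply quad_upd; auto. lra.
Qed.

Lemma Th_bound dF dh Th kappa j i u : HypTheta dF dh Th kappa -> quad u ->
  Rabs (Th j i u) <= kappa j i.
Proof.
  intros HT Hu. destruct HT as [_ [_ [Hk Hb]]].
  specialize (Hb j i u Hu). specialize (Hk j i).
  assert (Rmin (Rmin 1 (Rmin (fst u) (snd u))) (sqrt (finv (dF i) (coord i u) / finv (dF j) (coord j u))) <= 1).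
  { eapply Rle_trans. apply Rmin_l. apply Rmin_l. }
  nra.
Qed.

Lemma abs_mono f f' g g' a b : a <= b ->
  (forall x, a < x <= b -> derivable_pt_lim f x (f' x)) ->
  (forall x, a < x <= b -> derivable_pt_lim g x (g' x)) ->
  (forall x, a < x < b -> Rabs (f' x) <= g' x) ->
  rcont f a -> rcont g a -> Rabs (f a) <= g a -> Rabs (f b) <= g b.
Proof.
  intros Hab Hf Hg Hd Hrf Hrg H0.
  assert (A1 : g a - f a <= g b - f b).
  { apply (mono_le (fun x => g x - f x) (fun x => g' x - f' x)); auto.
    - intros x Hx. apply dminus; auto.
    - intros x Hx. pose proof (Hd x Hx). apply absle in H. lra.
    - apply rcont_minus; auto. }
  assert (A2 : g a + f a <= g b + f b).
  { apply (mono_le (fun x => g x + f x) (fun x => g' x + f' x)); auto.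
    - intros x Hx. apply dplus; auto.
    - intros x Hx. pose proof (Hd x Hx). apply absle in H. lra.
    - apply rcont_plus; auto. }
  apply absle in H0. apply Rabs_le. lra.
Qed.


Lemma axis_zero h dh d2h i q : Hyph h dh d2h -> quad q -> (fst q = 0 \/ snd q = 0) ->
  h q = 0 /\ dh i q = 0.
Proof.
  intros Hh Hq Hax. destruct Hh as [_ [_ [_ [_ [_ H]]]]]. destruct (H q Hq Hax) as [A [B C]].
  destruct i; auto.
Qed.

Lemma h_bound F dF d2F m M beta r0 h dh d2h Th kappa i p :
  (forall j, HypF (F j) (dF j) (d2F j) (m j) (M j) (beta j) r0) ->
  Hyph h dh d2h -> HypTheta dF dh Th kappa -> quad p ->
  Rabs (h p) <= kappa i i * F i (coord i p).
Proof.
  intros HF Hh HT Hp.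
  assert (Hk : 0 < kappa i i) by apply HT.
  destruct (HF_F0 _ _ _ _ _ _ _ (HF i)) as [F0 dF0].
  destruct (axis_zero h dh d2h i (upd i p 0) Hh (quad_upd i p 0 Hp (Rle_refl 0)) (axis_upd i p)) as [Z1 Z2].
  assert (Hpsi : forall x, 0 <= x -> Rabs (dh i (upd i p x)) <= kappa i i * dF i x).
  { intros x Hx.
    apply (abs_mono (fun x => dh i (upd i p x)) (fun x => Th i i (U dF (upd i p x)) * d2F i x)
       (fun x => kappa i i * dF i x) (fun x => kappa i i * d2F i x) 0 x); auto.
    - intros y Hy. eapply chain; eauto. lra.
    - intros y Hy. apply dscal. apply (HF_d2F _ _ _ _ _ _ _ (HF i)); lra.
    - intros y Hy. rewrite Rabs_mult.
      assert (Hd : 0 < d2F i y) by (apply (HF_d2pos _ _ _ _ _ _ _ (HF i)); lra).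
      rewrite (Rabs_right (d2F i y)) by lra.
      apply Rmult_le_compat_r; [lra|]. eapply Th_bound; eauto. eapply quad_U; eauto.
      apply quad_upd; auto; lra.
    - apply cont_line; auto; [lra|]. apply Hh. apply quad_upd; auto; lra.
    - apply rcont_scal. apply (HF_rcdF _ _ _ _ _ _ _ (HF i)); lra.
    - rewrite Z2, dF0, Rabs_R0. lra. }
  assert (Hphi : forall x, 0 <= x -> Rabs (h (upd i p x)) <= kappa i i * F i x).
  { intros x Hx.
    apply (abs_mono (fun x => h (upd i p x)) (fun x => dh i (upd i p x))
       (fun x => kappa i i * F i x) (fun x => kappa i i * dF i x) 0 x); auto.
    - intros y Hy. apply partial_line; auto; [lra|]. apply Hh. apply quad_upd; auto; lra.
    - intros y Hy. apply dscal. apply (HF_dF _ _ _ _ _ _ _ (HF i)); lra.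
    - intros y Hy. apply Hpsi; lra.
    - apply cont_line; auto; [lra|]. apply Hh. apply quad_upd; auto; lra.
    - apply rcont_scal. apply (HF_rcF _ _ _ _ _ _ _ (HF i)); lra.
    - rewrite Z1, F0, Rabs_R0. lra. }
  rewrite <- (upd_coord i p) at 1. apply Hphi. apply quad_coord; auto.
Qed.

Lemma mvt_bound f f' x u K e :
  (forall z, Rmin x u <= z <= Rmax x u -> derivable_pt_lim f z (f' z)) ->
  (forall z, Rmin x u <= z <= Rmax x u -> Rabs (f' z - K) <= e) ->
  Rabs (f u - f x - K * (u - x)) <= e * Rabs (u - x).
Proof.
  intros Hd Hb.
  destruct (Rtotal_order x u) as [C|[C|C]].
  - rewrite Rmin_left, Rmax_right in * by lra.
    destruct (MVT_cor2 f f' x u C Hd) as [c [Hc1 Hc2]].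
    rewrite Hc1. replace (f' c * (u - x) - K * (u - x)) with ((f' c - K) * (u - x)) by ring.
    rewrite Rabs_mult. apply Rmult_le_compat_r; [apply Rabs_pos|]. apply Hb; lra.
  - subst. replace (f u - f u - K * (u - u)) with 0 by ring. rewrite Rabs_R0, Rminus_diag, Rabs_R0. lra.
  - rewrite Rmin_right, Rmax_left in * by lra.
    destruct (MVT_cor2 f f' u x C Hd) as [c [Hc1 Hc2]].
    replace (f u - f x - K * (u - x)) with (- (f x - f u) + K * (x - u)) by ring.
    rewrite Hc1. replace (- (f' c * (x - u)) + K * (x - u)) with ((f' c - K) * (u - x)) by ring.
    rewrite Rabs_mult. apply Rmult_le_compat_r; [apply Rabs_pos|]. apply Hb; lra.
Qed.

Lemma diff2d (f f1 f2 : R -> R -> R) x y :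
  locally_2d (fun u v => derivable_pt_lim (fun z => f z v) u (f1 u v)) x y ->
  continuity_2d_pt f1 x y ->
  derivable_pt_lim (fun z => f x z) y (f2 x y) ->
  differentiable_pt_lim f x y (f1 x y) (f2 x y).
Proof.
  intros [d1 Hd1] Hc Hd2 eps.
  assert (He2 : 0 < eps / 2) by (pose proof (cond_pos eps); lra).
  destruct (Hc (mkposreal _ He2)) as [d2 Hd2']. simpl in Hd2'.
  destruct (Hd2 (eps / 2) He2) as [d3 Hd3].
  assert (Hd : 0 < Rmin d1 (Rmin d2 d3)).
  { apply Rmin_pos; [apply cond_pos| apply Rmin_pos; apply cond_pos]. }
  exists (mkposreal _ Hd). intros u v Hu Hv. simpl in Hu, Hv.
  assert (Hm1 := Rmin_l d1 (Rmin d2 d3)). assert (Hm2 := Rmin_r d1 (Rmin d2 d3)).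
  assert (Hm3 := Rmin_l d2 d3). assert (Hm4 := Rmin_r d2 d3).
  assert (A : Rabs (f u v - f x v - f1 x y * (u - x)) <= eps / 2 * Rabs (u - x)).
  { apply (mvt_bound (fun z => f z v) (fun z => f1 z v)).
    - intros z Hz. apply Hd1; [|lra].
      assert (Rabs (z - x) <= Rabs (u - x)).
      { unfold Rmin, Rmax in Hz. destruct (Rle_dec x u); apply Rabs_le; split;
        unfold Rabs; destruct (Rcase_abs (u - x)); lra. }
      lra.
    - intros z Hz. left. apply Hd2'; [|lra].
      assert (Rabs (z - x) <= Rabs (u - x)).
      { unfold Rmin, Rmax in Hz. destruct (Rle_dec x u); apply Rabs_le; split;
        unfold Rabs; destruct (Rcase_abs (u - x)); lra. }
      lra. }
  assert (B : Rabs (f x v - f x y - f2 x y * (v - y)) <= eps / 2 * Rabs (v - y)).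
  { destruct (Req_dec v y) as [E|E].
    - subst. replace (f x y - f x y - f2 x y * (y - y)) with 0 by ring.
      rewrite Rminus_diag, !Rabs_R0; lra.
    - assert (Hh : v - y <> 0) by lra.
      assert (Hlt : Rabs (v - y) < d3) by lra.
      specialize (Hd3 (v - y) Hh Hlt).
      replace (y + (v - y)) with v in Hd3 by ring.
      replace (f x v - f x y - f2 x y * (v - y)) with (((f x v - f x y) / (v - y) - f2 x y) * (v - y)) by (field; auto).
      rewrite Rabs_mult. apply Rmult_le_compat_r; [apply Rabs_pos| lra]. }
  replace (f u v - f x y - (f1 x y * (u - x) + f2 x y * (v - y))) with
    ((f u v - f x v - f1 x y * (u - x)) + (f x v - f x y - f2 x y * (v - y))) by ring.
  eapply Rle_trans. apply Rabs_triang.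
  assert (Rabs (u - x) <= Rmax (Rabs (u - x)) (Rabs (v - y))) by apply Rmax_l.
  assert (Rabs (v - y) <= Rmax (Rabs (u - x)) (Rabs (v - y))) by apply Rmax_r.
  pose proof (cond_pos eps). nra.
Qed.

Lemma dist2_le a b : dist2 a b <= Rabs (fst a - fst b) + Rabs (snd a - snd b).
Proof.
  unfold dist2. set (A := fst a - fst b). set (B := snd a - snd b).
  pose proof (Rabs_pos A); pose proof (Rabs_pos B).
  rewrite <- (sqrt_Rsqr (Rabs A + Rabs B)) by lra.
  apply sqrt_le_1_alt.
  assert (E1 : A ^ 2 = Rsqr (Rabs A)) by (rewrite <- Rsqr_abs; unfold Rsqr; ring).
  assert (E2 : B ^ 2 = Rsqr (Rabs B)) by (rewrite <- Rsqr_abs; unfold Rsqr; ring).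
  rewrite E1, E2. unfold Rsqr. nra.
Qed.

Lemma Th_cont dF dh Th kappa j i w : HypTheta dF dh Th kappa -> quad w ->
  forall eps, 0 < eps -> exists d, 0 < d /\ forall v, quad v ->
   Rabs (fst v - fst w) < d -> Rabs (snd v - snd w) < d -> Rabs (Th j i v - Th j i w) < eps.
Proof.
  intros HT Hw eps Heps. destruct HT as [_ [HL _]].
  destruct (HL j i w Hw) as [d [L [Hd HLw]]].
  set (e := Rmin (d / 2) (eps / (2 * (Rabs L + 1)))).
  assert (HL1 : 0 < Rabs L + 1) by (pose proof (Rabs_pos L); lra).
  assert (He : 0 < e) by (apply Rmin_pos; [lra| apply Rdiv_lt_0_compat; lra]).
  assert (He1 : e <= d / 2) by apply Rmin_l.
  assert (He2 : e <= eps / (2 * (Rabs L + 1))) by apply Rmin_r.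
  exists e; split; auto. intros v Hv H1 H2.
  assert (Hdw : dist2 w w = 0).
  { unfold dist2. rewrite !Rminus_diag. replace (0 ^ 2 + 0 ^ 2) with 0 by ring. apply sqrt_0. }
  assert (Hdv : dist2 v w <= Rabs (fst v - fst w) + Rabs (snd v - snd w)) by apply dist2_le.
  assert (Hdv0 : 0 <= dist2 v w) by apply sqrt_pos.
  assert (Hvd : dist2 v w < d) by lra.
  assert (Hwd : dist2 w w < d) by lra.
  specialize (HLw v w Hv Hw Hvd Hwd). 
  assert (L * dist2 v w <= (Rabs L + 1) * dist2 v w).
  { apply Rmult_le_compat_r; auto. pose proof (Rle_abs L); lra. }
  assert ((Rabs L + 1) * dist2 v w < (Rabs L + 1) * (2 * e)).
  { apply Rmult_lt_compat_l; [lra|]. lra. }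
  assert ((Rabs L + 1) * (2 * e) <= eps).
  { apply Rle_trans with ((Rabs L + 1) * (2 * (eps / (2 * (Rabs L + 1))))).
    apply Rmult_le_compat_l; lra. right; field; lra. }
  lra.
Qed.

Lemma cont_nonneg_pt f x : 0 < x -> cont_nonneg f x -> continuity_pt f x.
Proof.
  intros Hx H eps Heps.
  destruct (proj1 (filterlim_locally _ _) H (mkposreal _ Heps)) as [d Hd].
  exists (Rmin d x); split. apply Rmin_pos; [apply cond_pos| auto].
  intros y [_ Hy]. simpl in Hy. unfold R_dist in Hy.
  assert (Rabs (y - x) < d) by (apply Rlt_le_trans with (1 := Hy), Rmin_l).
  assert (Rabs (y - x) < x) by (apply Rlt_le_trans with (1 := Hy), Rmin_r).
  apply (Hd y); auto. unfold nonneg. apply Rabs_def2 in H1. lra.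
Qed.

Lemma ThU_cont2 F dF d2F m M beta r0 dh Th kappa j i x y :
  (forall j, HypF (F j) (dF j) (d2F j) (m j) (M j) (beta j) r0) ->
  HypTheta dF dh Th kappa -> 0 < x -> 0 < y ->
  continuity_2d_pt (fun u v => Th j i (U dF (u, v))) x y.
Proof.
  intros HF HT Hx Hy eps.
  assert (Hw : quad (U dF (x, y))) by (eapply quad_U; eauto; split; simpl; lra).
  destruct (Th_cont dF dh Th kappa j i _ HT Hw eps (cond_pos eps)) as [d [Hd H]].
  destruct (dpl_cont (dF I1) x (d2F I1 x) (HF_d2F _ _ _ _ _ _ _ (HF I1) x Hx) d Hd) as [d1 [Hd1 H1]].
  destruct (dpl_cont (dF I2) y (d2F I2 y) (HF_d2F _ _ _ _ _ _ _ (HF I2) y Hy) d Hd) as [d2 [Hd2 H2]].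
  assert (Hm : 0 < Rmin (Rmin d1 d2) (Rmin x y)) by (repeat apply Rmin_pos; auto).
  exists (mkposreal _ Hm). intros u v Hu Hv. simpl in Hu, Hv.
  pose proof (Rmin_l (Rmin d1 d2) (Rmin x y)). pose proof (Rmin_r (Rmin d1 d2) (Rmin x y)).
  pose proof (Rmin_l d1 d2). pose proof (Rmin_r d1 d2). pose proof (Rmin_l x y). pose proof (Rmin_r x y).
  apply H.
  - eapply quad_U; eauto. apply Rabs_def2 in Hu. apply Rabs_def2 in Hv. split; simpl; lra.
  - simpl. apply H1. lra.
  - simpl. apply H2. lra.
Qed.

Lemma d2F_cont2 F dF d2F m M beta r0 (i : idx) x y :
  HypF F dF d2F m M beta r0 -> 0 < x ->
  continuity_2d_pt (fun u v => d2F (if i then u else v)) (if i then x else y) (if i then y else x).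
Proof.
  intros HF Hx.
  destruct i.
  - apply (continuity_1d_2d_pt_comp d2F (fun u v => u)).
    apply cont_nonneg_pt; auto. apply HF; lra. apply continuity_2d_pt_id1.
  - apply (continuity_1d_2d_pt_comp d2F (fun u v => v)).
    apply cont_nonneg_pt; auto. apply HF; lra. apply continuity_2d_pt_id2.
Qed.

Lemma loc_int x y : 0 < x -> 0 < y ->
  exists d : posreal, forall u v, Rabs (u - x) < d -> Rabs (v - y) < d -> 0 < u /\ 0 < v /\
     Rabs (u - x) < x /\ Rabs (v - y) < y.
Proof.
  intros Hx Hy. assert (H : 0 < Rmin x y / 2) by (assert (0 < Rmin x y) by (apply Rmin_pos; auto); lra).
  exists (mkposreal _ H). intros u v Hu Hv. simpl in *.
  pose proof (Rmin_l x y). pose proof (Rmin_r x y).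
  apply Rabs_def2 in Hu. apply Rabs_def2 in Hv.
  repeat split; try lra; apply Rabs_def1; lra.
Qed.

Lemma h_diff h dh d2h x y : Hyph h dh d2h -> 0 < x -> 0 < y ->
  differentiable_pt_lim (fun u v => h (u, v)) x y (dh I1 (x, y)) (dh I2 (x, y)).
Proof.
  intros Hh Hx Hy.
  apply (diff2d (fun u v => h (u, v)) (fun u v => dh I1 (u, v)) (fun u v => dh I2 (u, v))).
  - destruct (loc_int x y Hx Hy) as [d Hd]. exists d. intros u v Hu Hv.
    destruct (Hd u v Hu Hv) as [Hu0 [Hv0 _]].
    apply (partial_interior I1 h (u, v)); simpl; [split; simpl; lra| lra| apply Hh; split; simpl; lra].
  - intros eps. assert (Hq : quad (x, y)) by (split; simpl; lra).
    destruct (cont_quad_eps _ _ (proj1 (proj2 (proj2 (proj2 Hh))) I1 (x, y) Hq) eps (cond_pos eps)) as [d [Hd H]].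
    assert (Hm : 0 < Rmin d (Rmin x y)) by (repeat apply Rmin_pos; auto).
    exists (mkposreal _ Hm). intros u v Hu Hv. simpl in Hu, Hv.
    pose proof (Rmin_l d (Rmin x y)). pose proof (Rmin_r d (Rmin x y)).
    pose proof (Rmin_l x y). pose proof (Rmin_r x y).
    apply H; simpl; try lra. apply Rabs_def2 in Hu. apply Rabs_def2 in Hv. split; simpl; lra.
  - apply (partial_interior I2 h (x, y)); simpl; [split; simpl; lra| lra| apply Hh; split; simpl; lra].
Qed.

Definition D2 (dF d2F : idx -> R -> R) (Th : idx -> idx -> R * R -> R) (j i : idx) (P : R * R) : R :=
  Th j i (U dF P) * d2F i (coord i P).

Lemma dh_diff F dF d2F m M beta r0 dh Th kappa j x y :
  (forall j, HypF (F j) (dF j) (d2F j) (m j) (M j) (beta j) r0) ->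
  HypTheta dF dh Th kappa -> 0 < x -> 0 < y ->
  differentiable_pt_lim (fun u v => dh j (u, v)) x y (D2 dF d2F Th j I1 (x, y)) (D2 dF d2F Th j I2 (x, y)).
Proof.
  intros HF HT Hx Hy. unfold D2.
  apply (diff2d (fun u v => dh j (u, v)) (fun u v => Th j I1 (U dF (u, v)) * d2F I1 u)
                 (fun u v => Th j I2 (U dF (u, v)) * d2F I2 v)).
  - destruct (loc_int x y Hx Hy) as [d Hd]. exists d. intros u v Hu Hv.
    destruct (Hd u v Hu Hv) as [Hu0 [Hv0 _]].
    apply (chain F dF d2F m M beta r0 dh Th kappa I1 j (u, v) u); auto. split; simpl; lra.
  - apply continuity_2d_pt_mult. eapply ThU_cont2; eauto.
    apply (d2F_cont2 _ _ _ _ _ _ _ I1 x y (HF I1) Hx).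
  - apply (chain F dF d2F m M beta r0 dh Th kappa I2 j (x, y) y); auto. split; simpl; lra.
Qed.

Lemma locally_pos (u : R) : 0 < u -> locally u (fun z => 0 < z).
Proof.
  intros Hu. exists (mkposreal u Hu). intros z Hz. change (Rabs (z - u) < u) in Hz.
  apply Rabs_def2 in Hz. lra.
Qed.

Lemma Derive_dpl f x l : derivable_pt_lim f x l -> Derive f x = l.
Proof. intros H. apply is_derive_unique. apply is_derive_Reals. auto. Qed.

Lemma sym_D2 F dF d2F m M beta r0 h dh d2h Th kappa x y :
  (forall j, HypF (F j) (dF j) (d2F j) (m j) (M j) (beta j) r0) ->
  Hyph h dh d2h -> HypTheta dF dh Th kappa -> 0 < x -> 0 < y ->
  D2 dF d2F Th I2 I1 (x, y) = D2 dF d2F Th I1 I2 (x, y).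
Proof.
  intros HF Hh HT Hx Hy.
  assert (P1 : forall u v, 0 < u -> 0 < v -> Derive (fun t => h (u, t)) v = dh I2 (u, v)).
  { intros u v Hu Hv. apply Derive_dpl.
    apply (partial_interior I2 h (u, v)); simpl; [split; simpl; lra| lra| apply Hh; split; simpl; lra]. }
  assert (P2 : forall u v, 0 < u -> 0 < v -> Derive (fun t => h (t, v)) u = dh I1 (u, v)).
  { intros u v Hu Hv. apply Derive_dpl.
    apply (partial_interior I1 h (u, v)); simpl; [split; simpl; lra| lra| apply Hh; split; simpl; lra]. }
  assert (C1 : forall u v, 0 < u -> 0 < v ->
     derivable_pt_lim (fun z => dh I2 (z, v)) u (D2 dF d2F Th I2 I1 (u, v))).
  { intros u v Hu Hv. apply (chain F dF d2F m M beta r0 dh Th kappa I1 I2 (u, v) u); auto. split; simpl; lra. }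
  assert (C2 : forall u v, 0 < u -> 0 < v ->
     derivable_pt_lim (fun z => dh I1 (u, z)) v (D2 dF d2F Th I1 I2 (u, v))).
  { intros u v Hu Hv. apply (chain F dF d2F m M beta r0 dh Th kappa I2 I1 (u, v) v); auto. split; simpl; lra. }
  assert (E1 : forall u v, 0 < u -> 0 < v ->
     is_derive (fun z => Derive (fun t => h (z, t)) v) u (D2 dF d2F Th I2 I1 (u, v))).
  { intros u v Hu Hv. apply is_derive_ext_loc with (f := fun z => dh I2 (z, v)).
    - generalize (locally_pos u Hu). apply filter_imp. intros z Hz. symmetry; apply P1; auto.
    - apply is_derive_Reals; auto. }
  assert (E2 : forall u v, 0 < u -> 0 < v ->
     is_derive (fun z => Derive (fun t => h (t, z)) u) v (D2 dF d2F Th I1 I2 (u, v))).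
  { intros u v Hu Hv. apply is_derive_ext_loc with (f := fun z => dh I1 (u, z)).
    - generalize (locally_pos v Hv). apply filter_imp. intros z Hz. symmetry; apply P2; auto.
    - apply is_derive_Reals; auto. }
  pose proof (Schwarz (fun u v => h (u, v)) x y) as S. cbv beta in S.
  rewrite <- (is_derive_unique _ _ _ (E1 x y Hx Hy)), <- (is_derive_unique _ _ _ (E2 x y Hx Hy)).
  apply S.
  - destruct (loc_int x y Hx Hy) as [d Hd]. exists d. intros u v Hu Hv.
    destruct (Hd u v Hu Hv) as [Hu0 [Hv0 _]].
    repeat split.
    + exists (dh I1 (u, v)). apply is_derive_Reals.
      apply (partial_interior I1 h (u, v)); simpl; [split; simpl; lra| lra| apply Hh; split; simpl; lra].
    + exists (dh I2 (u, v)). apply is_derive_Reals.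
      apply (partial_interior I2 h (u, v)); simpl; [split; simpl; lra| lra| apply Hh; split; simpl; lra].
    + eexists. apply E1; auto.
    + eexists. apply E2; auto.
  - apply continuity_2d_pt_ext_loc with (f := fun u v => Th I2 I1 (U dF (u, v)) * d2F I1 u).
    + destruct (loc_int x y Hx Hy) as [d Hd]. exists d. intros u v Hu Hv.
      destruct (Hd u v Hu Hv) as [Hu0 [Hv0 _]].
      symmetry. apply (is_derive_unique _ _ _ (E1 u v Hu0 Hv0)).
    + apply continuity_2d_pt_mult. eapply ThU_cont2; eauto.
      apply (d2F_cont2 _ _ _ _ _ _ _ I1 x y (HF I1) Hx).
  - apply continuity_2d_pt_ext_loc with (f := fun u v => Th I1 I2 (U dF (u, v)) * d2F I2 v).
    + destruct (loc_int x y Hx Hy) as [d Hd]. exists d. intros u v Hu Hv.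
      destruct (Hd u v Hu Hv) as [Hu0 [Hv0 _]].
      symmetry. apply (is_derive_unique _ _ _ (E2 u v Hu0 Hv0)).
    + apply continuity_2d_pt_mult. eapply ThU_cont2; eauto.
      apply (d2F_cont2 _ _ _ _ _ _ _ I2 y x (HF I2) Hy).
Qed.

Lemma D2_diag F dF d2F m M beta r0 dh Th kappa i x y :
  (forall j, HypF (F j) (dF j) (d2F j) (m j) (M j) (beta j) r0) ->
  HypTheta dF dh Th kappa -> 0 < x -> 0 < y ->
  Rabs (D2 dF d2F Th i i (x, y)) <= kappa i i * d2F i (coord i (x, y)).
Proof.
  intros HF HT Hx Hy. unfold D2. rewrite Rabs_mult.
  assert (0 < d2F i (coord i (x, y))) by (destruct i; simpl; eapply HF_d2pos; eauto).
  rewrite (Rabs_right (d2F i _)) by lra. apply Rmult_le_compat_r; [lra|].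
  eapply Th_bound; eauto. eapply quad_U; eauto. split; simpl; lra.
Qed.

Lemma D2_cross_bound F dF d2F m M beta r0 dh Th kappa j i x y :
  (forall j, HypF (F j) (dF j) (d2F j) (m j) (M j) (beta j) r0) ->
  HypTheta dF dh Th kappa -> 0 < x -> 0 < y ->
  Rabs (D2 dF d2F Th j i (x, y)) <=
    kappa j i * sqrt (coord i (x, y) / coord j (x, y)) * d2F i (coord i (x, y)).
Proof.
  intros HF HT Hx Hy. unfold D2. rewrite Rabs_mult.
  assert (0 < d2F i (coord i (x, y))) by (destruct i; simpl; eapply HF_d2pos; eauto).
  rewrite (Rabs_right (d2F i _)) by lra. apply Rmult_le_compat_r; [lra|].
  assert (Hq : quad (U dF (x, y))) by (eapply quad_U; eauto; split; simpl; lra).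
  destruct HT as [_ [_ [Hk Hb]]]. specialize (Hb j i _ Hq). specialize (Hk j i).
  assert (E : forall k, finv (dF k) (coord k (U dF (x, y))) = coord k (x, y)).
  { intros k; destruct k; simpl; eapply finv_dF; eauto; lra. }
  rewrite !E in Hb.
  eapply Rle_trans. apply Hb. apply Rmult_le_compat_l; [lra| apply Rmin_r].
Qed.

Lemma cross_sq F dF d2F m M beta r0 h dh d2h Th kappa x y :
  (forall j, HypF (F j) (dF j) (d2F j) (m j) (M j) (beta j) r0) ->
  Hyph h dh d2h -> HypTheta dF dh Th kappa -> 0 < x -> 0 < y ->
  (D2 dF d2F Th I2 I1 (x, y)) ^ 2 <= kappa I2 I1 * kappa I1 I2 * d2F I1 x * d2F I2 y.
Proof.
  intros HF Hh HT Hx Hy.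
  pose proof (D2_cross_bound F dF d2F m M beta r0 dh Th kappa I2 I1 x y HF HT Hx Hy) as B1.
  pose proof (D2_cross_bound F dF d2F m M beta r0 dh Th kappa I1 I2 x y HF HT Hx Hy) as B2.
  rewrite <- (sym_D2 F dF d2F m M beta r0 h dh d2h Th kappa x y HF Hh HT Hx Hy) in B2.
  simpl in B1, B2.
  set (X := D2 dF d2F Th I2 I1 (x, y)) in *.
  assert (Hs : sqrt (x / y) * sqrt (y / x) = 1).
  { rewrite <- sqrt_mult_alt by (apply Rdiv_le_0_compat; lra).
    replace (x / y * (y / x)) with 1 by (field; lra). apply sqrt_1. }
  pose proof (Rabs_pos X).
  assert (E : X ^ 2 = Rabs X * Rabs X).
  { replace (X ^ 2) with (Rsqr X) by (unfold Rsqr; ring). rewrite Rsqr_abs. unfold Rsqr; ring. }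
  rewrite E.
  eapply Rle_trans. apply Rmult_le_compat; try apply Rabs_pos. apply B1. apply B2.
  replace (kappa I2 I1 * sqrt (x / y) * d2F I1 x * (kappa I1 I2 * sqrt (y / x) * d2F I2 y))
    with (kappa I2 I1 * kappa I1 I2 * d2F I1 x * d2F I2 y * (sqrt (x / y) * sqrt (y / x))) by ring.
  rewrite Hs. lra.
Qed.

Lemma hess_bound (w1 w2 a b D11 D22 X k11 k22 k12 k21 eps : R) :
  0 < a -> 0 < b -> 0 < k11 -> 0 < k22 -> 0 < k12 -> 0 < k21 -> 0 < eps ->
  eps <= / (4 * (k11 + k12 + k21 + k22)) ->
  Rabs D11 <= k11 * a -> Rabs D22 <= k22 * b -> X ^ 2 <= k21 * k12 * a * b ->
  (w1 * w1 * a + w2 * w2 * b) / 2 <=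
  a * w1 * w1 + b * w2 * w2 + 2 * eps * ((D11 * w1 + X * w2) * w1 + (X * w1 + D22 * w2) * w2).
Proof.
  intros Ha Hb H11 H22 H12 H21 He HeK B11 B22 BX.
  set (A := w1 * w1 * a). set (B := w2 * w2 * b).
  assert (HA : 0 <= A) by (unfold A; nra). assert (HB : 0 <= B) by (unfold B; nra).
  set (Z := (k12 + k21) * (A + B) / 4).
  assert (HZ : 0 <= Z) by (unfold Z; nra).
  assert (Hc : Rabs (w1 * w2 * X) <= Z).
  { rewrite <- (Rabs_right Z) by lra. apply Rsqr_le_abs_0. unfold Rsqr.
    assert ((w1 * w2 * X) * (w1 * w2 * X) = (w1 * w1) * (w2 * w2) * X ^ 2) by ring.
    rewrite H.
    assert ((w1 * w1) * (w2 * w2) * X ^ 2 <= (w1 * w1) * (w2 * w2) * (k21 * k12 * a * b)).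
    { apply Rmult_le_compat_l; [nra| auto]. }
    assert ((w1 * w1) * (w2 * w2) * (k21 * k12 * a * b) = k21 * k12 * A * B) by (unfold A, B; ring).
    assert (k21 * k12 * A * B <= Z * Z).
    { unfold Z. assert (0 <= (k12 - k21) ^ 2) by apply pow2_ge_0. assert (0 <= (A - B) ^ 2) by apply pow2_ge_0.
      assert (4 * k21 * k12 <= (k12 + k21) ^ 2) by nra.
      assert (4 * A * B <= (A + B) ^ 2) by nra.
      assert (0 <= k21 * k12) by nra. assert (0 <= A * B) by nra.
      assert ((4 * k21 * k12) * (4 * A * B) <= (k12 + k21) ^ 2 * (A + B) ^ 2).
      { apply Rmult_le_compat; nra. }
      nra. }
    lra. }
  apply absle in Hc. apply absle in B11. apply absle in B22.
  assert (T1 : w1 * w1 * D11 >= - k11 * A).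
  { unfold A. assert (0 <= w1 * w1) by nra. nra. }
  assert (T2 : w2 * w2 * D22 >= - k22 * B).
  { unfold B. assert (0 <= w2 * w2) by nra. nra. }
  assert (HK : 0 < k11 + k12 + k21 + k22) by lra.
  assert (He4 : eps * (4 * (k11 + k12 + k21 + k22)) <= 1).
  { apply Rmult_le_reg_r with (/ (4 * (k11 + k12 + k21 + k22))).
    apply Rinv_0_lt_compat; lra.
    rewrite Rmult_assoc, Rinv_r, Rmult_1_l, Rmult_1_r by lra. auto. }
  replace (a * w1 * w1 + b * w2 * w2 + 2 * eps * ((D11 * w1 + X * w2) * w1 + (X * w1 + D22 * w2) * w2))
    with (A + B + 2 * eps * (w1 * w1 * D11 + w2 * w2 * D22 + 2 * (w1 * w2 * X))) by (unfold A, B; ring).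
  unfold Z in Hc.
  assert (eps * (k11 * A) <= eps * (k11 * (A + B))) by (apply Rmult_le_compat_l; nra).
  assert (eps * (k22 * B) <= eps * (k22 * (A + B))) by (apply Rmult_le_compat_l; nra).
  assert (eps * (4 * (k11 + k12 + k21 + k22)) * (A + B) <= A + B) by nra.
  nra.
Qed.

Lemma conv1d g g' :
  (forall s, 0 < s < 1 -> derivable_pt_lim g s (g' s)) ->
  (forall s t, 0 < s < t -> t < 1 -> g' s < g' t) ->
  rcont g 0 -> rcont (fun s => g (1 - s)) 0 ->
  forall t, 0 < t < 1 -> g t < t * g 1 + (1 - t) * g 0.
Proof.
  intros Hd Hinc Hr0 Hr1 t Ht. set (k := g' t).
  assert (A : k * 0 - g 0 < k * t - g t).
  { apply (mono_lt (fun s => k * s - g s) (fun s => k * 1 - g' s)); try lra.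
    - intros x Hx. apply dminus. apply dscal, did. apply Hd; lra.
    - intros x Hx. pose proof (Hinc x t ltac:(lra) ltac:(lra)). unfold k. lra.
    - apply rcont_minus; auto. apply rcont_scal, rcont_id. }
  assert (B : - (g (1 - 0) - k * (1 - 0)) < - (g (1 - (1 - t)) - k * (1 - (1 - t)))).
  { apply (mono_lt (fun s => - (g (1 - s) - k * (1 - s))) (fun s => - (g' (1 - s) * (0 - 1) - k * (0 - 1)))); try lra.
    - intros x Hx. apply derivable_pt_lim_opp. apply dminus.
      + apply (dcomp g (fun s => 1 - s)). apply dminus. apply dconst. apply did. apply Hd; lra.
      + apply dscal. apply dminus. apply dconst. apply did.
    - intros x Hx. destruct (Req_dec x (1 - t)); [lra|].
      pose proof (Hinc t (1 - x) ltac:(lra) ltac:(lra)). unfold k. lra.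
    - intros eps Heps. destruct (rcont_minus (fun s => g (1 - s)) (fun s => k * (1 - s)) 0 Hr1
          ltac:(apply rcont_scal; apply rcont_minus; [apply rcont_const| apply rcont_id]) eps Heps) as [d [Hd0 Hd1]].
      exists d; split; auto. intros y Hy1 Hy2. specialize (Hd1 y Hy1 Hy2).
      rewrite <- Rabs_Ropp. replace (- (- (g (1 - y) - k * (1 - y)) - - (g (1 - 0) - k * (1 - 0))))
        with (g (1 - y) - k * (1 - y) - (g (1 - 0) - k * (1 - 0))) by ring. auto. }
  replace (1 - 0) with 1 in B by ring. replace (1 - (1 - t)) with t in B by ring.
  assert (E : t * g 1 + (1 - t) * g 0 - g t =
     t * (g 1 - k - (g t - k * t)) + (1 - t) * (k * t - g t - (k * 0 - g 0))) by ring.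
  assert (0 < t * (g 1 - k - (g t - k * t))) by (apply Rmult_lt_0_compat; lra).
  assert (0 < (1 - t) * (k * t - g t - (k * 0 - g 0))) by (apply Rmult_lt_0_compat; lra).
  lra.
Qed.

Lemma inc_of_d2 g' g'' :
  (forall s, 0 < s < 1 -> derivable_pt_lim g' s (g'' s)) ->
  (forall s, 0 < s < 1 -> 0 < g'' s) ->
  forall s t, 0 < s < t -> t < 1 -> g' s < g' t.
Proof.
  intros Hd Hp s t Hs Ht. apply (mono_lt g' g''); try lra.
  - intros x Hx; apply Hd; lra.
  - intros x Hx; apply Hp; lra.
  - apply (rcont_of_dpl g' s (g'' s)). apply Hd; lra.
Qed.

Definition lin (a b s : R) : R := a + s * (b - a).

Lemma dlin a b s : derivable_pt_lim (lin a b) s (b - a).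
Proof. unfold lin. eapply dval. apply dplus. apply dconst. apply dmult. apply did. apply dconst. cbv beta. ring. Qed.

Lemma lin_pos a b s : 0 <= a -> 0 <= b -> 0 <= s <= 1 -> 0 <= lin a b s.
Proof. intros Ha Hb Hs. unfold lin. replace (a + s * (b - a)) with ((1 - s) * a + s * b) by ring. nra. Qed.

Lemma lin_pos' a b s : 0 <= a -> 0 <= b -> 0 < s < 1 -> (0 < a \/ 0 < b) -> 0 < lin a b s.
Proof. intros Ha Hb Hs Hab. unfold lin. replace (a + s * (b - a)) with ((1 - s) * a + s * b) by ring.
  destruct Hab; nra. Qed.

Lemma lin_rev a b s : lin a b (1 - s) = lin b a s.
Proof. unfold lin. ring. Qed.

Lemma rcont_ext f g a : (forall y, f y = g y) -> rcont f a -> rcont g a.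
Proof. intros E H eps Heps. destruct (H eps Heps) as [d [Hd H1]]. exists d; split; auto.
  intros. rewrite <- !E. auto. Qed.

Lemma rcont_lin_comp f a b : 0 <= a -> 0 <= b ->
  (forall eps, 0 < eps -> exists d, 0 < d /\ forall y, 0 <= y -> Rabs (y - a) < d -> Rabs (f y - f a) < eps) ->
  rcont (fun s => f (lin a b s)) 0.
Proof.
  intros Ha Hb Hf eps Heps. destruct (Hf eps Heps) as [d [Hd H]].
  exists (Rmin 1 (d / (Rabs (b - a) + 1))). split.
  { apply Rmin_pos; [lra| apply Rdiv_lt_0_compat; auto; pose proof (Rabs_pos (b - a)); lra]. }
  intros y Hy1 Hy2.
  assert (Hy3 : y <= 1) by (pose proof (Rmin_l 1 (d / (Rabs (b - a) + 1))); lra).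
  assert (Hy4 : y < d / (Rabs (b - a) + 1)) by (pose proof (Rmin_r 1 (d / (Rabs (b - a) + 1))); lra).
  replace (lin a b 0) with a by (unfold lin; ring).
  apply H. apply lin_pos; lra.
  unfold lin. replace (a + y * (b - a) - a) with (y * (b - a)) by ring.
  rewrite Rabs_mult, Rabs_right by lra.
  assert (HL : 0 < Rabs (b - a) + 1) by (pose proof (Rabs_pos (b - a)); lra).
  apply Rle_lt_trans with (y * (Rabs (b - a) + 1)). apply Rmult_le_compat_l; lra.
  apply Rmult_lt_reg_r with (/ (Rabs (b - a) + 1)). apply Rinv_0_lt_compat; lra.
  rewrite Rmult_assoc, Rinv_r, Rmult_1_r by lra. exact Hy4.
Qed.

Lemma rcont_lin2 (f : R * R -> R) a1 a2 b1 b2 : quad (a1, a2) -> quad (b1, b2) -> cont_quad f (a1, a2) ->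
  rcont (fun s => f (lin a1 b1 s, lin a2 b2 s)) 0.
Proof.
  intros [Ha1 Ha2] [Hb1 Hb2] Hc eps Heps. simpl in *.
  destruct (cont_quad_eps f _ Hc eps Heps) as [d [Hd H]].
  set (L := Rabs (b1 - a1) + Rabs (b2 - a2) + 1).
  assert (HL : 0 < L) by (unfold L; pose proof (Rabs_pos (b1 - a1)); pose proof (Rabs_pos (b2 - a2)); lra).
  exists (Rmin 1 (d / L)). split. { apply Rmin_pos; [lra| apply Rdiv_lt_0_compat; auto]. }
  intros y Hy1 Hy2.
  assert (Hy3 : y <= 1) by (pose proof (Rmin_l 1 (d / L)); lra).
  assert (Hy4 : y < d / L) by (pose proof (Rmin_r 1 (d / L)); lra).
  assert (HyL : y * L < d).
  { apply Rmult_lt_reg_r with (/ L). apply Rinv_0_lt_compat; lra.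
    rewrite Rmult_assoc, Rinv_r, Rmult_1_r by lra. exact Hy4. }
  replace (lin a1 b1 0) with a1 by (unfold lin; ring).
  replace (lin a2 b2 0) with a2 by (unfold lin; ring).
  apply H; simpl.
  - split; simpl; apply lin_pos; lra.
  - unfold lin. replace (a1 + y * (b1 - a1) - a1) with (y * (b1 - a1)) by ring.
    rewrite Rabs_mult, Rabs_right by lra.
    apply Rle_lt_trans with (y * L); auto. apply Rmult_le_compat_l; [lra|].
    unfold L; pose proof (Rabs_pos (b2 - a2)); lra.
  - unfold lin. replace (a2 + y * (b2 - a2) - a2) with (y * (b2 - a2)) by ring.
    rewrite Rabs_mult, Rabs_right by lra.
    apply Rle_lt_trans with (y * L); auto. apply Rmult_le_compat_l; [lra|].
    unfold L; pose proof (Rabs_pos (b1 - a1)); lra.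
Qed.

Lemma F_wcont F dF d2F m M beta r0 a : HypF F dF d2F m M beta r0 -> 0 <= a ->
  forall eps, 0 < eps -> exists d, 0 < d /\ forall y, 0 <= y -> Rabs (y - a) < d -> Rabs (F y - F a) < eps.
Proof.
  intros HF Ha. destruct HF as [H1 _]. apply (deriv_within_cont nonneg F a (dF a)). apply H1; auto.
Qed.

Lemma Feps_rcont F dF d2F m M beta r0 h dh d2h e a1 a2 b1 b2 :
  (forall j, HypF (F j) (dF j) (d2F j) (m j) (M j) (beta j) r0) ->
  Hyph h dh d2h -> quad (a1, a2) -> quad (b1, b2) ->
  rcont (fun s => Feps F h e (lin a1 b1 s, lin a2 b2 s)) 0.
Proof.
  intros HF Hh Ha Hb. unfold Feps. simpl.
  destruct Ha as [Ha1 Ha2]; destruct Hb as [Hb1 Hb2]; simpl in *.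
  apply rcont_plus; [apply rcont_plus|].
  - apply rcont_lin_comp; auto. eapply F_wcont; eauto.
  - apply rcont_lin_comp; auto. eapply F_wcont; eauto.
  - apply rcont_scal. apply rcont_lin2; try (split; simpl; auto). apply Hh. split; simpl; auto.
Qed.

Lemma interior_case F dF d2F m M beta r0 h dh d2h Th kappa eps p1 p2 q1 q2 :
  (forall j, HypF (F j) (dF j) (d2F j) (m j) (M j) (beta j) r0) ->
  Hyph h dh d2h -> HypTheta dF dh Th kappa -> 0 < eps ->
  eps <= / (4 * (kappa I1 I1 + kappa I1 I2 + kappa I2 I1 + kappa I2 I2)) ->
  (p1, p2) <> (q1, q2) ->
  (forall s, 0 < s < 1 -> 0 < lin q1 p1 s /\ 0 < lin q2 p2 s) ->
  exists g', (forall s, 0 < s < 1 ->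
     derivable_pt_lim (fun s => Feps F h (2 * eps) (lin q1 p1 s, lin q2 p2 s)) s (g' s)) /\
   (forall s t, 0 < s < t -> t < 1 -> g' s < g' t).
Proof.
  intros HF Hh HT He HeK Hpq Hint.
  set (w1 := p1 - q1). set (w2 := p2 - q2).
  exists (fun s => dF I1 (lin q1 p1 s) * w1 + dF I2 (lin q2 p2 s) * w2 +
     2 * eps * (dh I1 (lin q1 p1 s, lin q2 p2 s) * w1 + dh I2 (lin q1 p1 s, lin q2 p2 s) * w2)).
  split.
  - intros s Hs. destruct (Hint s Hs) as [H1 H2]. unfold Feps; simpl.
    eapply dval. apply dplus. apply dplus.
    + apply (dcomp (F I1) (lin q1 p1)). apply dlin. eapply HF_dF; eauto.
    + apply (dcomp (F I2) (lin q2 p2)). apply dlin. eapply HF_dF; eauto.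
    + apply dscal. apply (derivable_pt_lim_comp_2d (fun u v => h (u, v)) (lin q1 p1) (lin q2 p2)).
      eapply h_diff; eauto. apply dlin. apply dlin.
    + cbv beta. fold w1 w2. ring.
  - apply (inc_of_d2 _ (fun s =>
       d2F I1 (lin q1 p1 s) * w1 * w1 + d2F I2 (lin q2 p2 s) * w2 * w2 +
       2 * eps * ((D2 dF d2F Th I1 I1 (lin q1 p1 s, lin q2 p2 s) * w1 + D2 dF d2F Th I1 I2 (lin q1 p1 s, lin q2 p2 s) * w2) * w1
                + (D2 dF d2F Th I2 I1 (lin q1 p1 s, lin q2 p2 s) * w1 + D2 dF d2F Th I2 I2 (lin q1 p1 s, lin q2 p2 s) * w2) * w2))).
    + intros s Hs. destruct (Hint s Hs) as [H1 H2].
      eapply dval. apply dplus. apply dplus.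
      * apply dmult. apply (dcomp (dF I1) (lin q1 p1)). apply dlin. eapply HF_d2F; eauto. apply dconst.
      * apply dmult. apply (dcomp (dF I2) (lin q2 p2)). apply dlin. eapply HF_d2F; eauto. apply dconst.
      * apply dscal. apply dplus.
        -- apply dmult; [|apply dconst].
           apply (derivable_pt_lim_comp_2d (fun u v => dh I1 (u, v)) (lin q1 p1) (lin q2 p2)).
           eapply dh_diff; eauto. apply dlin. apply dlin.
        -- apply dmult; [|apply dconst].
           apply (derivable_pt_lim_comp_2d (fun u v => dh I2 (u, v)) (lin q1 p1) (lin q2 p2)).
           eapply dh_diff; eauto. apply dlin. apply dlin.
      * cbv beta. fold w1 w2. ring.
    + intros s Hs. destruct (Hint s Hs) as [H1 H2].
      set (x := lin q1 p1 s) in *. set (y := lin q2 p2 s) in *.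
      assert (Ha : 0 < d2F I1 x) by (eapply HF_d2pos; eauto).
      assert (Hb : 0 < d2F I2 y) by (eapply HF_d2pos; eauto).
      assert (Hk : forall j i, 0 < kappa j i) by apply HT.
      pose proof (D2_diag F dF d2F m M beta r0 dh Th kappa I1 x y HF HT H1 H2) as B11.
      pose proof (D2_diag F dF d2F m M beta r0 dh Th kappa I2 x y HF HT H1 H2) as B22.
      simpl in B11, B22.
      pose proof (cross_sq F dF d2F m M beta r0 h dh d2h Th kappa x y HF Hh HT H1 H2) as BX.
      rewrite <- (sym_D2 F dF d2F m M beta r0 h dh d2h Th kappa x y HF Hh HT H1 H2).
      pose proof (hess_bound w1 w2 (d2F I1 x) (d2F I2 y) (D2 dF d2F Th I1 I1 (x, y)) (D2 dF d2F Th I2 I2 (x, y))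
        (D2 dF d2F Th I2 I1 (x, y)) (kappa I1 I1) (kappa I2 I2) (kappa I1 I2) (kappa I2 I1) eps
        Ha Hb (Hk I1 I1) (Hk I2 I2) (Hk I1 I2) (Hk I2 I1) He HeK B11 B22 BX) as HB.
      assert (Hw : w1 <> 0 \/ w2 <> 0).
      { destruct (Req_dec w1 0); destruct (Req_dec w2 0); auto.
        exfalso. apply Hpq. unfold w1, w2 in *. f_equal; lra. }
      assert (0 < w1 * w1 * d2F I1 x + w2 * w2 * d2F I2 y).
      { destruct Hw as [Hw|Hw].
        - assert (0 < w1 * w1) by (apply Rsqr_pos_lt; auto). assert (0 <= w2 * w2) by nra. nra.
        - assert (0 < w2 * w2) by (apply Rsqr_pos_lt; auto). assert (0 <= w1 * w1) by nra. nra. }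
      lra.
Qed.

Lemma lin_const a s : lin a a s = a.
Proof. unfold lin; ring. Qed.

Lemma one_dim_inc F dF d2F m M beta r0 a b :
  HypF F dF d2F m M beta r0 -> 0 <= a -> 0 <= b -> a <> b ->
  forall s t, 0 < s < t -> t < 1 -> dF (lin a b s) * (b - a) < dF (lin a b t) * (b - a).
Proof.
  intros HF Ha Hb Hab s t Hs Ht.
  assert (L1 : 0 <= lin a b s) by (apply lin_pos; lra).
  assert (L2 : 0 <= lin a b t) by (apply lin_pos; lra).
  assert (E : lin a b t - lin a b s = (t - s) * (b - a)) by (unfold lin; ring).
  destruct (Rlt_or_le a b).
  - assert (lin a b s < lin a b t) by nra.
    pose proof (HF_dF_lt _ _ _ _ _ _ _ HF (lin a b s) (lin a b t) ltac:(lra)). nra.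
  - assert (b < a) by lra. assert (lin a b t < lin a b s) by nra.
    pose proof (HF_dF_lt _ _ _ _ _ _ _ HF (lin a b t) (lin a b s) ltac:(lra)). nra.
Qed.

Lemma axis_case F dF d2F m M beta r0 h dh d2h e p1 p2 q1 q2 :
  (forall j, HypF (F j) (dF j) (d2F j) (m j) (M j) (beta j) r0) ->
  Hyph h dh d2h -> quad (p1, p2) -> quad (q1, q2) -> (p1, p2) <> (q1, q2) ->
  ((p1 = 0 /\ q1 = 0) \/ (p2 = 0 /\ q2 = 0)) ->
  exists g', (forall s, 0 < s < 1 ->
     derivable_pt_lim (fun s => Feps F h e (lin q1 p1 s, lin q2 p2 s)) s (g' s)) /\
   (forall s t, 0 < s < t -> t < 1 -> g' s < g' t).
Proof.
  intros HF Hh [Hp1 Hp2] [Hq1 Hq2] Hpq Hax. simpl in *.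
  assert (Hnb : forall s, 0 < s < 1 -> exists d, 0 < d /\ forall y, Rabs (y - s) < d -> 0 <= y <= 1).
  { intros s Hs. exists (Rmin s (1 - s)). split. apply Rmin_pos; lra.
    intros y Hy. pose proof (Rmin_l s (1 - s)). pose proof (Rmin_r s (1 - s)).
    apply Rabs_def2 in Hy. lra. }
  destruct (HF_F0 _ _ _ _ _ _ _ (HF I1)) as [F10 _].
  destruct (HF_F0 _ _ _ _ _ _ _ (HF I2)) as [F20 _].
  destruct Hax as [[-> ->]|[-> ->]].
  - assert (Hne : q2 <> p2) by (intro; apply Hpq; subst; auto).
    exists (fun s => dF I2 (lin q2 p2 s) * (p2 - q2)). split.
    + intros s Hs. apply dext with (g := fun s => F I2 (lin q2 p2 s)).
      * destruct (Hnb s Hs) as [d [Hd H]]. exists d; split; auto. intros y Hy.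
        specialize (H y Hy). unfold Feps; simpl. rewrite lin_const, F10.
        assert (HQ : quad (0, lin q2 p2 y)) by (split; simpl; [lra| apply lin_pos; lra]).
        rewrite (proj1 (axis_zero h dh d2h I1 _ Hh HQ ltac:(simpl; auto))). ring.
      * apply (dcomp (F I2) (lin q2 p2)). apply dlin. apply (HF_dF _ _ _ _ _ _ _ (HF I2)).
        apply lin_pos'; try lra; try (destruct (Req_dec q2 0); [right|left]; lra).
    + apply (one_dim_inc _ _ _ _ _ _ _ _ _ (HF I2)); auto.
  - assert (Hne : q1 <> p1) by (intro; apply Hpq; subst; auto).
    exists (fun s => dF I1 (lin q1 p1 s) * (p1 - q1)). split.
    + intros s Hs. apply dext with (g := fun s => F I1 (lin q1 p1 s)).
      * destruct (Hnb s Hs) as [d [Hd H]]. exists d; split; auto. intros y Hy.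
        specialize (H y Hy). unfold Feps; simpl. rewrite lin_const, F20.
        assert (HQ : quad (lin q1 p1 y, 0)) by (split; simpl; [apply lin_pos; lra| lra]).
        rewrite (proj1 (axis_zero h dh d2h I1 _ Hh HQ ltac:(simpl; auto))). ring.
      * apply (dcomp (F I1) (lin q1 p1)). apply dlin. apply (HF_dF _ _ _ _ _ _ _ (HF I1)).
        apply lin_pos'; try lra; try (destruct (Req_dec q1 0); [right|left]; lra).
    + apply (one_dim_inc _ _ _ _ _ _ _ _ _ (HF I1)); auto.
Qed.

Lemma strict_conv F dF d2F m M beta r0 h dh d2h Th kappa eps :
  (forall j, HypF (F j) (dF j) (d2F j) (m j) (M j) (beta j) r0) ->
  Hyph h dh d2h -> HypTheta dF dh Th kappa -> 0 < eps ->
  eps <= / (4 * (kappa I1 I1 + kappa I1 I2 + kappa I2 I1 + kappa I2 I2)) ->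
  strictly_convex_quad (Feps F h (2 * eps)).
Proof.
  intros HF Hh HT He HeK [p1 p2] [q1 q2] t Hp Hq Hpq Ht.
  set (g := fun s => Feps F h (2 * eps) (lin q1 p1 s, lin q2 p2 s)).
  assert (E1 : comb t (p1, p2) (q1, q2) = (lin q1 p1 t, lin q2 p2 t)).
  { unfold comb, lin; simpl; f_equal; ring. }
  assert (E2 : (p1, p2) = (lin q1 p1 1, lin q2 p2 1)) by (unfold lin; f_equal; ring).
  assert (E3 : (q1, q2) = (lin q1 p1 0, lin q2 p2 0)) by (unfold lin; f_equal; ring).
  rewrite E1. rewrite E2, E3. change (g t < t * g 1 + (1 - t) * g 0).
  assert (Hex : exists g', (forall s, 0 < s < 1 -> derivable_pt_lim g s (g' s)) /\
            (forall s t, 0 < s < t -> t < 1 -> g' s < g' t)).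
  { destruct Hp as [Hp1 Hp2]; destruct Hq as [Hq1 Hq2]; simpl in *.
    destruct (classic ((p1 = 0 /\ q1 = 0) \/ (p2 = 0 /\ q2 = 0))) as [Hax|Hax].
    - eapply axis_case; eauto; split; simpl; auto.
    - eapply interior_case; eauto. intros s Hs. split; apply lin_pos'; auto; lra || idtac. }
  destruct Hex as [g' [Hd Hi]].
  apply (conv1d g g' Hd Hi).
  - unfold g. eapply Feps_rcont; eauto.
  - apply rcont_ext with (f := fun s => Feps F h (2 * eps) (lin p1 q1 s, lin p2 q2 s)).
    + intros y. unfold g. rewrite !lin_rev. auto.
    + eapply Feps_rcont; eauto.
  - auto.
Qed.

Lemma cont_nonneg_eps f x : cont_nonneg f x ->
  forall eps, 0 < eps -> exists d, 0 < d /\ forall y, 0 <= y -> Rabs (y - x) < d -> Rabs (f y - f x) < eps.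
Proof.
  intros H eps Heps.
  destruct (proj1 (filterlim_locally _ _) H (mkposreal _ Heps)) as [d Hd].
  exists d; split; [apply cond_pos|]. intros y Hy1 Hy2. apply (Hd y); auto.
Qed.

Lemma Rmax0_lip x c : Rabs (Rmax 0 x - Rmax 0 c) <= Rabs (x - c).
Proof.
  unfold Rmax. destruct (Rle_dec 0 x); destruct (Rle_dec 0 c); unfold Rabs;
  repeat destruct Rcase_abs; lra.
Qed.

Lemma clamp_cont f c : 0 <= c ->
  (forall eps, 0 < eps -> exists d, 0 < d /\ forall y, 0 <= y -> Rabs (y - c) < d -> Rabs (f y - f c) < eps) ->
  continuity_pt (fun x => f (Rmax 0 x)) c.
Proof.
  intros Hc H eps Heps. destruct (H eps Heps) as [d [Hd H1]].
  exists d; split; auto. intros y [_ Hy]. simpl in Hy. unfold R_dist in Hy. simpl.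
  unfold R_dist. rewrite (Rmax_right 0 c) by lra.
  apply H1. apply Rmax_l. pose proof (Rmax0_lip y c). rewrite (Rmax_right 0 c) in H0 by lra. lra.
Qed.

Lemma d2F_bound F dF d2F m M beta r0 B : HypF F dF d2F m M beta r0 -> 0 <= B ->
  exists L, 0 < L /\ forall x, 0 <= x <= B -> d2F x <= L.
Proof.
  intros HF HB.
  destruct (continuity_ab_maj (fun x => d2F (Rmax 0 x)) 0 B HB) as [xm [Hxm _]].
  { intros c Hc. apply clamp_cont; [lra|]. apply cont_nonneg_eps. apply HF. lra. }
  exists (Rabs (d2F (Rmax 0 xm)) + 1). split. pose proof (Rabs_pos (d2F (Rmax 0 xm))); lra.
  intros x Hx. specialize (Hxm x Hx). rewrite (Rmax_right 0 x) in Hxm by lra.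
  pose proof (Rle_abs (d2F (Rmax 0 xm))). lra.
Qed.

Lemma dF_lip F dF d2F m M beta r0 L a b : HypF F dF d2F m M beta r0 ->
  0 <= a <= b -> (forall x, a <= x <= b -> d2F x <= L) -> dF b - dF a <= L * (b - a).
Proof.
  intros HF Hab HL.
  pose proof (mono_le (fun x => L * x - dF x) (fun x => L - d2F x) a b) as H. simpl in H.
  enough (L * a - dF a <= L * b - dF b) by lra. apply H; [lra| | |].
  - intros x Hx. eapply dval. apply dminus. apply dscal, did. eapply HF_d2F; eauto; lra. ring.
  - intros x Hx. pose proof (HL x ltac:(lra)). lra.
  - apply rcont_minus. apply rcont_scal, rcont_id. eapply HF_rcdF; eauto; lra.
Qed.

Lemma near_bound F dF d2F m M beta r0 L B r rb : HypF F dF d2F m M beta r0 ->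
  (forall x, 0 <= x <= B -> d2F x <= L) -> 0 <= r <= B -> 0 <= rb <= B ->
  (dF r - dF rb) ^ 2 <= 2 * L * bregman F dF r rb.
Proof.
  intros HF HL Hr Hrb. unfold bregman.
  pose proof (HF_dF _ _ _ _ _ _ _ HF) as Hd. pose proof (HF_d2F _ _ _ _ _ _ _ HF) as Hd2.
  pose proof (HF_rcF _ _ _ _ _ _ _ HF) as Hc. pose proof (HF_rcdF _ _ _ _ _ _ _ HF) as Hc2.
  set (psi := fun x => 2 * L * (F x - F rb - dF rb * (x - rb)) - (dF x - dF rb) * (dF x - dF rb)).
  set (psi' := fun x => 2 * (dF x - dF rb) * (L - d2F x)).
  assert (Dpsi : forall x, 0 < x -> derivable_pt_lim psi x (psi' x)).
  { intros x Hx. unfold psi, psi'. eapply dval. apply dminus. apply dscal. apply dminus. apply dminus.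
    apply Hd; auto. apply dconst. apply dscal. apply dminus. apply did. apply dconst.
    apply dmult; apply dminus; try apply dconst; apply Hd2; auto. cbv beta; ring. }
  assert (Rpsi : forall a, 0 <= a -> rcont psi a).
  { intros a Ha. unfold psi. apply rcont_minus. apply rcont_scal. apply rcont_minus. apply rcont_minus.
    apply Hc; auto. apply rcont_const. apply rcont_scal. apply rcont_minus. apply rcont_id. apply rcont_const.
    apply rcont_mult; apply rcont_minus; try apply rcont_const; apply Hc2; auto. }
  assert (P0 : psi rb = 0) by (unfold psi; ring).
  enough (0 <= psi r) by (unfold psi in H; nra).
  destruct (Rle_or_lt rb r).
  - rewrite <- P0. apply (mono_le psi psi'); auto.
    + intros x Hx. apply Dpsi. lra.
    + intros x Hx. unfold psi'. pose proof (HL x ltac:(lra)).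
      pose proof (HF_dF_le _ _ _ _ _ _ _ HF rb x ltac:(lra)). nra.
    + apply Rpsi; lra.
  - enough (- psi r <= - psi rb) by lra.
    apply (mono_le (fun x => - psi x) (fun x => - psi' x)); auto; [lra| | |].
    + intros x Hx. apply derivable_pt_lim_opp. apply Dpsi. lra.
    + intros x Hx. unfold psi'. pose proof (HL x ltac:(lra)).
      pose proof (HF_dF_le _ _ _ _ _ _ _ HF x rb ltac:(lra)). nra.
    + apply (rcont_ext (fun x => -1 * psi x)). intros; ring. apply rcont_scal. apply Rpsi; lra.
Qed.

Lemma gap_min F dF d2F m M beta r0 H del : HypF F dF d2F m M beta r0 -> 0 < H -> 0 < del ->
  exists g, 0 < g /\ forall x, 0 <= x <= H -> g <= dF (x + del) - dF x.
Proof.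
  intros HF HH Hdel.
  destruct (continuity_ab_min (fun x => dF (Rmax 0 x + del) - dF (Rmax 0 x)) 0 H) as [xm [Hxm Hxm2]]; [lra| |].
  { intros c Hc. apply continuity_pt_minus.
    - intros eps Heps.
      assert (Hp : 0 < Rmax 0 c + del) by (pose proof (Rmax_l 0 c); lra).
      destruct (dpl_cont (dF) _ _ (HF_d2F _ _ _ _ _ _ _ HF _ Hp) eps Heps) as [d [Hd H1]].
      exists d; split; auto. intros y [_ Hy]. simpl in *. unfold R_dist in *.
      apply H1. pose proof (Rmax0_lip y c).
      replace (Rmax 0 y + del - (Rmax 0 c + del)) with (Rmax 0 y - Rmax 0 c) by ring. lra.
    - apply (clamp_cont dF c); [lra|]. intros eps Heps.
      destruct HF as [_ [H1 _]]. apply (deriv_within_cont nonneg dF c (d2F c)); auto. apply H1; lra. }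
  exists (dF (Rmax 0 xm + del) - dF (Rmax 0 xm)). split.
  - assert (0 <= Rmax 0 xm) by apply Rmax_l.
    pose proof (HF_dF_lt _ _ _ _ _ _ _ HF (Rmax 0 xm) (Rmax 0 xm + del) ltac:(lra)). lra.
  - intros x Hx. specialize (Hxm x Hx). simpl in Hxm. rewrite (Rmax_right 0 x) in Hxm by lra. rewrite (Rmax_right 0 xm) in * by lra. auto.
Qed.

Lemma far_bound F dF d2F m M beta r0 H del : HypF F dF d2F m M beta r0 -> 0 < H -> 0 < del <= 1 ->
  exists c, 0 < c /\ forall r rb, 0 <= r -> 0 <= rb <= H -> del <= Rabs (r - rb) ->
    c * (1 + Rabs (r - rb)) <= bregman F dF r rb.
Proof.
  intros HF HH Hdel.
  destruct (gap_min F dF d2F m M beta r0 H (del / 2) HF HH ltac:(lra)) as [g [Hg Hgap]].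
  exists (g * del / (2 * (1 + del))). split.
  { apply Rdiv_lt_0_compat; [nra| lra]. }
  intros r rb Hr Hrb Hd.
  pose proof (HF_dF _ _ _ _ _ _ _ HF) as Dd. pose proof (HF_rcF _ _ _ _ _ _ _ HF) as Rc.
  assert (Main : g * Rabs (r - rb) / 2 <= bregman F dF r rb).
  { unfold bregman. destruct (Rle_or_lt rb r).
    - rewrite Rabs_right in * by lra.
      assert (B0 : 0 <= bregman F dF (rb + del / 2) rb) by (eapply breg_nn; eauto; lra).
      unfold bregman in B0.
      pose proof (mono_le (fun x => F x - F rb - dF rb * (x - rb) - g * (x - rb - del / 2))
        (fun x => dF x - dF rb - g) (rb + del / 2) r) as Hm. simpl in Hm.
      assert (F r - F rb - dF rb * (r - rb) - g * (r - rb - del / 2) >= 0).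
      { apply Rle_ge. eapply Rle_trans; [|apply Hm]; try lra.
        - intros x Hx. eapply dval. apply dminus. apply dminus. apply dminus. apply Dd; lra.
          apply dconst. apply dscal. apply dminus. apply did. apply dconst.
          apply dscal. apply dminus. apply dminus. apply did. apply dconst. apply dconst. cbv beta; ring.
        - intros x Hx. pose proof (Hgap rb ltac:(lra)).
          pose proof (HF_dF_le _ _ _ _ _ _ _ HF (rb + del / 2) x ltac:(lra)). lra.
        - rc. apply Rc; lra. }
      nra.
    - rewrite Rabs_left in * by lra.
      assert (Hrb2 : del <= rb) by lra.
      assert (B0 : 0 <= bregman F dF (rb - del / 2) rb) by (eapply breg_nn; eauto; lra).
      unfold bregman in B0.
      pose proof (mono_le (fun x => - (F x - F rb - dF rb * (x - rb) - g * (rb - del / 2 - x)))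
        (fun x => - (dF x - dF rb + g)) r (rb - del / 2)) as Hm. simpl in Hm.
      assert (F r - F rb - dF rb * (r - rb) - g * (rb - del / 2 - r) >= 0).
      { enough (- (F r - F rb - dF rb * (r - rb) - g * (rb - del / 2 - r)) <=
           - (F (rb - del / 2) - F rb - dF rb * (rb - del / 2 - rb) - g * (rb - del / 2 - (rb - del / 2)))) by lra.
        apply Hm; try lra.
        - intros x Hx. eapply dval. apply derivable_pt_lim_opp.
          apply dminus. apply dminus. apply dminus. apply Dd; lra.
          apply dconst. apply dscal. apply dminus. apply did. apply dconst.
          apply dscal. apply dminus. apply dconst. apply did. cbv beta; ring.
        - intros x Hx. pose proof (Hgap (rb - del / 2) ltac:(lra)) as HG.
          replace (rb - del / 2 + del / 2) with rb in HG by ring.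
          pose proof (HF_dF_le _ _ _ _ _ _ _ HF x (rb - del / 2) ltac:(lra)). lra.
        - apply (rcont_ext (fun x => -1 * (F x - F rb - dF rb * (x - rb) - g * (rb - del / 2 - x)))).
          intros; ring. apply rcont_scal. rc. apply Rc; lra. }
      nra. }
  assert (HA : del <= Rabs (r - rb)) by auto.
  assert (1 + Rabs (r - rb) <= (1 + del) / del * Rabs (r - rb)).
  { apply Rmult_le_reg_l with del; [lra|].
    replace (del * ((1 + del) / del * Rabs (r - rb))) with ((1 + del) * Rabs (r - rb)) by (field; lra). nra. }
  apply Rle_trans with (g * del / (2 * (1 + del)) * ((1 + del) / del * Rabs (r - rb))).
  - apply Rmult_le_compat_l; auto. left. apply Rdiv_lt_0_compat; [nra| lra].
  - replace (g * del / (2 * (1 + del)) * ((1 + del) / del * Rabs (r - rb))) with (g * Rabs (r - rb) / 2)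
      by (field; lra). auto.
Qed.

Definition LipSpec (T : R * R -> R) (P : R * R) (dl : R * R) : Prop :=
  0 < fst dl /\ (quad P -> forall v w, quad v -> quad w -> dist2 v P < fst dl -> dist2 w P < fst dl ->
     Rabs (T v - T w) <= snd dl * dist2 v w).

Definition DL (T : R * R -> R) (P : R * R) : R * R := epsilon (inhabits (1, 0)) (LipSpec T P).

Lemma DL_spec T P : loc_lipschitz_quad T -> LipSpec T P (DL T P).
Proof.
  intros HL. unfold DL. apply epsilon_spec.
  destruct (classic (quad P)) as [Hq|Hq].
  - destruct (HL P Hq) as [d [L [Hd H]]]. exists (d, L). split; simpl; auto.
  - exists (1, 0). split; simpl; [lra| tauto].
Qed.

Definition pt2 (t : Compactness.Tn 2 R) : R * R := (fst t, fst (snd t)).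

Lemma fold_min_pos (f : Compactness.Tn 2 R -> R) l : (forall t, 0 < f t) ->
  0 < fold_right (fun t acc => Rmin (f t) acc) 1 l.
Proof. intros H. induction l; simpl; [lra| apply Rmin_pos; auto]. Qed.

Lemma fold_min_le (f : Compactness.Tn 2 R -> R) l t : In t l ->
  fold_right (fun t acc => Rmin (f t) acc) 1 l <= f t.
Proof.
  induction l; simpl; [tauto|]. intros [->|H].
  - apply Rmin_l.
  - eapply Rle_trans; [apply Rmin_r| auto].
Qed.

Lemma fold_max_nn (f : Compactness.Tn 2 R -> R) l : 0 <= fold_right (fun t acc => Rmax (f t) acc) 0 l.
Proof. induction l; simpl; [lra|]. eapply Rle_trans; [apply IHl| apply Rmax_r]. Qed.

Lemma fold_max_ge (f : Compactness.Tn 2 R -> R) l t : In t l ->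
  f t <= fold_right (fun t acc => Rmax (f t) acc) 0 l.
Proof.
  induction l; simpl; [tauto|]. intros [->|H].
  - apply Rmax_l.
  - eapply Rle_trans; [apply IHl; auto| apply Rmax_r].
Qed.

Lemma unif_lip (T : R * R -> R) A : loc_lipschitz_quad T -> 0 <= A ->
  exists rho L, 0 < rho /\ 0 <= L /\ forall u v,
    0 <= fst u <= A -> 0 <= snd u <= A -> 0 <= fst v <= A -> 0 <= snd v <= A ->
    Rabs (fst u - fst v) < rho -> Rabs (snd u - snd v) < rho ->
    Rabs (T u - T v) <= L * (Rabs (fst u - fst v) + Rabs (snd u - snd v)).
Proof.
  intros HL HA.
  assert (Hpos : forall t, 0 < fst (DL T (pt2 t)) / 4).
  { intros t. destruct (DL_spec T (pt2 t) HL) as [H _]. lra. }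
  set (delta := fun t => mkposreal _ (Hpos t)).
  pose proof (compactness_list 2 (0, (0, tt)) (A, (A, tt)) delta) as HC.
  apply NNPP. intro NG. apply HC. intros [l Hl]. apply NG. clear HC NG.
  set (rho := fold_right (fun t acc => Rmin (fst (DL T (pt2 t)) / 4) acc) 1 l).
  set (L := fold_right (fun t acc => Rmax (snd (DL T (pt2 t))) acc) 0 l).
  exists rho, L. split; [apply (fold_min_pos (fun t => fst (DL T (pt2 t)) / 4) l Hpos)|]. split; [apply fold_max_nn|].
  intros u v Hu1 Hu2 Hv1 Hv2 H1 H2.
  destruct (Hl (fst u, (snd u, tt))) as [t [Ht [Hb Hc]]].
  { simpl. repeat split; lra. }
  destruct t as [t1 [t2 []]]. simpl in Hb, Hc.
  destruct (DL_spec T (pt2 (t1, (t2, tt))) HL) as [Hd Hlip].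
  unfold pt2 in *. simpl in Hd, Hlip, Hc.
  set (d := fst (DL T (t1, t2))) in *.
  assert (Hrho : rho <= d / 4) by (apply (fold_min_le (fun t => fst (DL T (pt2 t)) / 4) l _ Ht)).
  assert (HLt : snd (DL T (t1, t2)) <= L) by (apply (fold_max_ge (fun t => snd (DL T (pt2 t))) l _ Ht)).
  assert (Hq : quad (t1, t2)) by (split; simpl; lra).
  destruct Hc as [Hc1 [Hc2 _]].
  assert (Du : dist2 u (t1, t2) < d).
  { pose proof (dist2_le u (t1, t2)). simpl in H. lra. }
  assert (Dv : dist2 v (t1, t2) < d).
  { pose proof (dist2_le v (t1, t2)). simpl in H.
    pose proof (Rabs_triang (fst v - fst u) (fst u - t1)).
    pose proof (Rabs_triang (snd v - snd u) (snd u - t2)).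
    replace (fst v - fst u + (fst u - t1)) with (fst v - t1) in H0 by ring.
    replace (snd v - snd u + (snd u - t2)) with (snd v - t2) in H3 by ring.
    rewrite <- Rabs_Ropp in H1, H2. replace (- (fst u - fst v)) with (fst v - fst u) in H1 by ring.
    replace (- (snd u - snd v)) with (snd v - snd u) in H2 by ring. lra. }
  assert (Hquv : quad u /\ quad v) by (split; split; lra).
  specialize (Hlip Hq u v (proj1 Hquv) (proj2 Hquv) Du Dv).
  pose proof (dist2_le u v). assert (0 <= dist2 u v) by apply sqrt_pos.
  assert (snd (DL T (t1, t2)) * dist2 u v <= L * dist2 u v) by (apply Rmult_le_compat_r; auto).
  assert (0 <= L) by apply fold_max_nn.
  assert (L * dist2 u v <= L * (Rabs (fst u - fst v) + Rabs (snd u - snd v))) by (apply Rmult_le_compat_l; auto).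
  lra.
Qed.

Lemma abs_sq x : Rabs x ^ 2 = x ^ 2.
Proof. unfold Rabs; destruct (Rcase_abs x); ring. Qed.

Lemma sq_sum_le a b : (a + b) ^ 2 <= 2 * (a ^ 2 + b ^ 2).
Proof. assert (0 <= (a - b) ^ 2) by apply pow2_ge_0. nra. Qed.

Lemma part5_ij F dF d2F m M beta r0 dh Th kappa j i H :
  (forall j, HypF (F j) (dF j) (d2F j) (m j) (M j) (beta j) r0) ->
  HypTheta dF dh Th kappa -> 0 < H ->
  exists bH, 0 < bH /\ forall rb r, quad rb -> fst rb <= H -> snd rb <= H -> quad r ->
    Rmax (fst r) (snd r) *
      (Th j i (dF I1 (fst r), dF I2 (snd r)) - Th j i (dF I1 (fst rb), dF I2 (snd rb))) ^ 2
    <= bH * (bregman (F I1) (dF I1) (fst r) (fst rb) + bregman (F I2) (dF I2) (snd r) (snd rb)).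
Proof.
  intros HF HT HH.
  set (B := H + 1).
  destruct (d2F_bound _ _ _ _ _ _ _ B (HF I1) ltac:(unfold B; lra)) as [La1 [HLa1 BLa1]].
  destruct (d2F_bound _ _ _ _ _ _ _ B (HF I2) ltac:(unfold B; lra)) as [La2 [HLa2 BLa2]].
  set (La := La1 + La2).
  assert (HLa : 0 < La) by (unfold La; lra).
  assert (BL1 : forall x, 0 <= x <= B -> d2F I1 x <= La).
  { intros x Hx. pose proof (BLa1 x Hx). unfold La; lra. }
  assert (BL2 : forall x, 0 <= x <= B -> d2F I2 x <= La).
  { intros x Hx. pose proof (BLa2 x Hx). unfold La; lra. }
  set (A := Rmax (dF I1 B) (dF I2 B)).
  assert (HA : 0 <= A).
  { unfold A. eapply Rle_trans; [|apply Rmax_l]. eapply HF_dFnn; eauto. unfold B; lra. }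
  assert (HLip : loc_lipschitz_quad (Th j i)) by apply HT.
  destruct (unif_lip (Th j i) A HLip HA) as [rho [L [Hrho [HL Hlip]]]].
  set (del := Rmin 1 (rho / La)).
  assert (Hdel : 0 < del <= 1).
  { split. apply Rmin_pos; [lra| apply Rdiv_lt_0_compat; lra]. apply Rmin_l. }
  assert (Hdel2 : La * del <= rho).
  { apply Rle_trans with (La * (rho / La)). apply Rmult_le_compat_l; [lra| apply Rmin_r].
    right; field; lra. }
  destruct (far_bound _ _ _ _ _ _ _ H del (HF I1) HH Hdel) as [c1 [Hc1 Hfar1]].
  destruct (far_bound _ _ _ _ _ _ _ H del (HF I2) HH Hdel) as [c2 [Hc2 Hfar2]].
  set (c := Rmin c1 c2).
  assert (Hc : 0 < c) by (apply Rmin_pos; auto).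
  assert (Hcc1 : c <= c1) by apply Rmin_l. assert (Hcc2 : c <= c2) by apply Rmin_r.
  set (k := kappa j i).
  assert (Hk : 0 < k) by apply HT.
  set (b1 := B * 4 * L ^ 2 * La). set (b2 := 4 * k ^ 2 * (H + 1) / c).
  assert (Hb1 : 0 <= b1) by (unfold b1, B; assert (0 <= L ^ 2) by apply pow2_ge_0; apply Rmult_le_pos; [|lra]; nra).
  assert (Hb2 : 0 <= b2) by (unfold b2; apply Rdiv_le_0_compat; [|lra]; assert (0 <= k ^ 2) by apply pow2_ge_0; nra).
  exists (b1 + b2 + 1). split; [lra|].
  intros [rb1 rb2] [r1 r2] [Hrb1 Hrb2] Hrb1H Hrb2H [Hr1 Hr2]. simpl in *.
  set (d1 := bregman (F I1) (dF I1) r1 rb1). set (d2 := bregman (F I2) (dF I2) r2 rb2).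
  assert (Hd1 : 0 <= d1) by (eapply breg_nn; eauto).
  assert (Hd2 : 0 <= d2) by (eapply breg_nn; eauto).
  set (TD := Th j i (dF I1 r1, dF I2 r2) - Th j i (dF I1 rb1, dF I2 rb2)).
  assert (HTD : 0 <= TD ^ 2) by apply pow2_ge_0.
  assert (Hmx : 0 <= Rmax r1 r2) by (eapply Rle_trans; [apply Hr1| apply Rmax_l]).
  enough (Rmax r1 r2 * TD ^ 2 <= (b1 + b2) * (d1 + d2)) by nra.
  destruct (classic (Rabs (r1 - rb1) < del /\ Rabs (r2 - rb2) < del)) as [[N1 N2]|NF].
  -
    apply Rabs_def2 in N1. apply Rabs_def2 in N2.
    assert (Hr1B : r1 <= B) by (unfold B; lra). assert (Hr2B : r2 <= B) by (unfold B; lra).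
    assert (Lu1 : Rabs (dF I1 r1 - dF I1 rb1) <= La * Rabs (r1 - rb1)).
    { destruct (Rle_or_lt rb1 r1).
      - pose proof (dF_lip _ _ _ _ _ _ _ La rb1 r1 (HF I1) ltac:(lra) ltac:(intros; apply BL1; unfold B in *; lra)).
        pose proof (HF_dF_le _ _ _ _ _ _ _ (HF I1) rb1 r1 ltac:(lra)).
        rewrite !Rabs_right by lra. lra.
      - pose proof (dF_lip _ _ _ _ _ _ _ La r1 rb1 (HF I1) ltac:(lra) ltac:(intros; apply BL1; unfold B in *; lra)).
        pose proof (HF_dF_le _ _ _ _ _ _ _ (HF I1) r1 rb1 ltac:(lra)).
        rewrite !Rabs_left1 by lra. lra. }
    assert (Lu2 : Rabs (dF I2 r2 - dF I2 rb2) <= La * Rabs (r2 - rb2)).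
    { destruct (Rle_or_lt rb2 r2).
      - pose proof (dF_lip _ _ _ _ _ _ _ La rb2 r2 (HF I2) ltac:(lra) ltac:(intros; apply BL2; unfold B in *; lra)).
        pose proof (HF_dF_le _ _ _ _ _ _ _ (HF I2) rb2 r2 ltac:(lra)).
        rewrite !Rabs_right by lra. lra.
      - pose proof (dF_lip _ _ _ _ _ _ _ La r2 rb2 (HF I2) ltac:(lra) ltac:(intros; apply BL2; unfold B in *; lra)).
        pose proof (HF_dF_le _ _ _ _ _ _ _ (HF I2) r2 rb2 ltac:(lra)).
        rewrite !Rabs_left1 by lra. lra. }
    assert (Rabs (r1 - rb1) < del) by (apply Rabs_def1; lra).
    assert (Rabs (r2 - rb2) < del) by (apply Rabs_def1; lra).
    assert (La * Rabs (r1 - rb1) < rho) by (apply Rlt_le_trans with (La * del); [apply Rmult_lt_compat_l; lra| lra]).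
    assert (La * Rabs (r2 - rb2) < rho) by (apply Rlt_le_trans with (La * del); [apply Rmult_lt_compat_l; lra| lra]).
    assert (Box : forall k x, 0 <= x <= B -> 0 <= dF k x <= A).
    { intros kk x Hx. split. eapply HF_dFnn; eauto; lra.
      apply Rle_trans with (dF kk B). eapply HF_dF_le; eauto; lra.
      unfold A; destruct kk; [apply Rmax_l| apply Rmax_r]. }
    assert (HT1 : Rabs TD <= L * (Rabs (dF I1 r1 - dF I1 rb1) + Rabs (dF I2 r2 - dF I2 rb2))).
    { apply (Hlip (dF I1 r1, dF I2 r2) (dF I1 rb1, dF I2 rb2)); simpl;
      try (apply Box; unfold B in *; lra); lra. }
    assert (Nb1 := near_bound _ _ _ _ _ _ _ La B r1 rb1 (HF I1) BL1 ltac:(lra) ltac:(unfold B; lra)).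
    assert (Nb2 := near_bound _ _ _ _ _ _ _ La B r2 rb2 (HF I2) BL2 ltac:(lra) ltac:(unfold B; lra)).
    fold d1 d2 in Nb1, Nb2.
    set (e1 := Rabs (dF I1 r1 - dF I1 rb1)) in *. set (e2 := Rabs (dF I2 r2 - dF I2 rb2)) in *.
    assert (E1 : e1 ^ 2 = (dF I1 r1 - dF I1 rb1) ^ 2) by (unfold e1; apply abs_sq).
    assert (E2 : e2 ^ 2 = (dF I2 r2 - dF I2 rb2) ^ 2) by (unfold e2; apply abs_sq).
    assert (He1 : 0 <= e1) by apply Rabs_pos. assert (He2 : 0 <= e2) by apply Rabs_pos.
    assert (HTD2 : TD ^ 2 <= (L * (e1 + e2)) ^ 2).
    { rewrite <- (abs_sq TD). apply pow_incr. split; [apply Rabs_pos| auto]. }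
    assert (HS : (e1 + e2) ^ 2 <= 2 * (e1 ^ 2 + e2 ^ 2)) by apply sq_sum_le.
    assert (HTD3 : TD ^ 2 <= 4 * L ^ 2 * La * (d1 + d2)).
    { replace ((L * (e1 + e2)) ^ 2) with (L ^ 2 * (e1 + e2) ^ 2) in HTD2 by ring.
      assert (0 <= L ^ 2) by apply pow2_ge_0. nra. }
    assert (Hmax : Rmax r1 r2 <= B) by (apply Rmax_lub; lra).
    assert (Rmax r1 r2 * TD ^ 2 <= B * (4 * L ^ 2 * La * (d1 + d2))).
    { apply Rmult_le_compat; auto. }
    unfold b1. assert (0 <= b2 * (d1 + d2)) by (apply Rmult_le_pos; lra). nra.
  -
    assert (HU : forall x y, 0 <= x -> 0 <= y -> quad (dF I1 x, dF I2 y)).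
    { intros x y Hx Hy. split; simpl; eapply HF_dFnn; eauto. }
    assert (T1 := Th_bound _ _ _ _ j i _ HT (HU r1 r2 Hr1 Hr2)).
    assert (T2 := Th_bound _ _ _ _ j i _ HT (HU rb1 rb2 Hrb1 Hrb2)).
    fold k in T1, T2.
    assert (HTDa : Rabs TD <= 2 * k).
    { unfold TD. eapply Rle_trans. apply Rabs_triang. rewrite Rabs_Ropp. lra. }
    assert (HTD2 : TD ^ 2 <= 4 * k ^ 2).
    { rewrite <- (abs_sq TD). replace (4 * k ^ 2) with ((2 * k) ^ 2) by ring.
      apply pow_incr. split; [apply Rabs_pos| auto]. }
    set (a1 := Rabs (r1 - rb1)) in *. set (a2 := Rabs (r2 - rb2)) in *.
    assert (Ha1 : 0 <= a1) by apply Rabs_pos. assert (Ha2 : 0 <= a2) by apply Rabs_pos.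
    assert (Hmax : Rmax r1 r2 <= H + a1 + a2).
    { unfold a1, a2. apply Rmax_lub.
      - pose proof (Rle_abs (r1 - rb1)). pose proof (Rabs_pos (r2 - rb2)). lra.
      - pose proof (Rle_abs (r2 - rb2)). pose proof (Rabs_pos (r1 - rb1)). lra. }
    assert (Claim : (H + a1 + a2) * c <= (H + 1) * (d1 + d2)).
    { destruct (Rlt_or_le a1 del) as [A1|A1]; destruct (Rlt_or_le a2 del) as [A2|A2].
      - exfalso. apply NF; auto.
      - pose proof (Hfar2 r2 rb2 Hr2 ltac:(lra) A2) as F2. fold d2 a2 in F2.
        assert (c * (1 + a2) <= c2 * (1 + a2)) by (apply Rmult_le_compat_r; lra).
        assert ((H + a1 + a2) * c <= (H + 1) * (1 + a2) * c).
        { apply Rmult_le_compat_r; [lra|]. nra. }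
        assert ((H + 1) * (1 + a2) * c <= (H + 1) * d2).
        { replace ((H + 1) * (1 + a2) * c) with ((H + 1) * (c * (1 + a2))) by ring.
          apply Rmult_le_compat_l; lra. }
        nra.
      - pose proof (Hfar1 r1 rb1 Hr1 ltac:(lra) A1) as F1. fold d1 a1 in F1.
        assert (c * (1 + a1) <= c1 * (1 + a1)) by (apply Rmult_le_compat_r; lra).
        assert ((H + a1 + a2) * c <= (H + 1) * (1 + a1) * c).
        { apply Rmult_le_compat_r; [lra|]. nra. }
        assert ((H + 1) * (1 + a1) * c <= (H + 1) * d1).
        { replace ((H + 1) * (1 + a1) * c) with ((H + 1) * (c * (1 + a1))) by ring.
          apply Rmult_le_compat_l; lra. }
        nra.
      - pose proof (Hfar1 r1 rb1 Hr1 ltac:(lra) A1) as F1. fold d1 a1 in F1.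
        pose proof (Hfar2 r2 rb2 Hr2 ltac:(lra) A2) as F2. fold d2 a2 in F2.
        assert (c * (1 + a1) <= c1 * (1 + a1)) by (apply Rmult_le_compat_r; lra).
        assert (c * (1 + a2) <= c2 * (1 + a2)) by (apply Rmult_le_compat_r; lra).
        assert ((H + a1 + a2) * c <= (H + 1) * (2 + a1 + a2) * c).
        { apply Rmult_le_compat_r; [lra|]. nra. }
        assert ((H + 1) * (2 + a1 + a2) * c <= (H + 1) * (d1 + d2)).
        { replace ((H + 1) * (2 + a1 + a2) * c) with ((H + 1) * (c * (1 + a1) + c * (1 + a2))) by ring.
          apply Rmult_le_compat_l; lra. }
        nra. }
    assert (Rmax r1 r2 * TD ^ 2 <= (H + a1 + a2) * (4 * k ^ 2)).
    { apply Rmult_le_compat; auto. }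
    assert ((H + a1 + a2) * (4 * k ^ 2) <= b2 * (d1 + d2)).
    { assert (X : H + a1 + a2 <= (H + 1) * (d1 + d2) / c).
      { apply Rmult_le_reg_r with c; auto. unfold Rdiv. rewrite Rmult_assoc, Rinv_l, Rmult_1_r by lra. lra. }
      replace (b2 * (d1 + d2)) with (4 * k ^ 2 * ((H + 1) * (d1 + d2) / c)) by (unfold b2; field; lra).
      assert (0 <= 4 * k ^ 2) by (assert (0 <= k ^ 2) by apply pow2_ge_0; lra).
      rewrite Rmult_comm. apply Rmult_le_compat_l; auto. }
    assert (0 <= b1 * (d1 + d2)) by (apply Rmult_le_pos; lra). nra.
Qed.

Theorem proposition2p4
  (F dF d2F : idx -> R -> R) (m M beta : idx -> R) (r0 : R)
  (h : R * R -> R) (dh : idx -> R * R -> R) (d2h : idx -> idx -> R * R -> R)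
  (Th : idx -> idx -> R * R -> R) (kappa : idx -> idx -> R)
  (HF : forall j, HypF (F j) (dF j) (d2F j) (m j) (M j) (beta j) r0)
  (Hh : Hyph h dh d2h)
  (HT : HypTheta dF dh Th kappa) :
  (* (1) and (2) *)
  (exists eps0, 0 < eps0 /\
     (forall eps, 0 < eps <= eps0 -> convex_quad (Feps F h (2 * eps))) /\
     (forall eps, 0 < eps < eps0 -> strictly_convex_quad (Feps F h (2 * eps))) /\
     (forall eps p, 0 < eps <= eps0 -> quad p ->
        / 2 * F I1 (fst p) + / 2 * F I2 (snd p) <= Feps F h eps p /\
        Feps F h eps p <= (1 + eps / 2 * kappa I1 I1) * F I1 (fst p)
                          + (1 + eps / 2 * kappa I2 I2) * F I2 (snd p))) /\
  (* (3) *)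
  (forall j r, 0 <= r <= r0 ->
     m j / (beta j + 1) * pw r (beta j + 1) <= dF j r <=
       M j / (beta j + 1) * pw r (beta j + 1) /\
     m j / ((beta j + 1) * (beta j + 2)) * pw r (beta j + 2) <= F j r <=
       M j / ((beta j + 1) * (beta j + 2)) * pw r (beta j + 2)) /\
  (* (4) *)
  (forall j, exists alpha, forall r, 0 <= r ->
     dF j r <= alpha * (Rmin 1 r + F j r)) /\
  (* (5) *)
  (forall H, 0 < H -> exists betaH, 0 < betaH /\
     forall rb r i j, quad rb -> fst rb <= H -> snd rb <= H -> quad r ->
       Rmax (fst r) (snd r) *
         (Th j i (dF I1 (fst r), dF I2 (snd r))
          - Th j i (dF I1 (fst rb), dF I2 (snd rb))) ^ 2
       <= betaH * (bregman (F I1) (dF I1) (fst r) (fst rb)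
                   + bregman (F I2) (dF I2) (snd r) (snd rb))).
Proof.
  assert (Hk : forall j i, 0 < kappa j i) by apply HT.
  set (K := kappa I1 I1 + kappa I1 I2 + kappa I2 I1 + kappa I2 I2).
  assert (HK : 0 < K) by (unfold K; pose proof (Hk I1 I1); pose proof (Hk I1 I2);
     pose proof (Hk I2 I1); pose proof (Hk I2 I2); lra).
  split; [|split; [|split]].
  - exists (/ (4 * K)). split; [apply Rinv_0_lt_compat; lra|]. split; [|split].
    + intros eps [He1 He2] p q t Hp Hq Ht.
      destruct (classic (p = q)) as [E|E].
      { subst q. assert (comb t p p = p) by (destruct p; unfold comb; simpl; f_equal; ring).
        rewrite H. lra. }
      destruct (Req_dec t 0) as [->|N0].
      { assert (comb 0 p q = q) by (destruct p, q; unfold comb; simpl; f_equal; ring). rewrite H. lra. }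
      destruct (Req_dec t 1) as [->|N1].
      { assert (comb 1 p q = p) by (destruct p, q; unfold comb; simpl; f_equal; ring). rewrite H. lra. }
      assert (T0 : 0 < t) by (destruct Ht as [Ht1 Ht2]; destruct Ht1 as [Ht1|Ht1]; [auto| exfalso; apply N0; auto]).
      assert (T1 : t < 1) by (destruct Ht as [Ht1 Ht2]; destruct Ht2 as [Ht2|Ht2]; [auto| exfalso; apply N1; auto]).
      left. apply (strict_conv F dF d2F m M beta r0 h dh d2h Th kappa eps HF Hh HT He1 He2 p q t Hp Hq E); lra.
    + intros eps [He1 He2]. apply (strict_conv F dF d2F m M beta r0 h dh d2h Th kappa eps HF Hh HT He1); left; exact He2.
    + intros eps p [He1 He2] Hp.
      pose proof (h_bound F dF d2F m M beta r0 h dh d2h Th kappa I1 p HF Hh HT Hp) as B1.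
      pose proof (h_bound F dF d2F m M beta r0 h dh d2h Th kappa I2 p HF Hh HT Hp) as B2.
      simpl in B1, B2. apply absle in B1. apply absle in B2.
      assert (F1 : 0 <= F I1 (fst p)) by (eapply HF_Fnn; eauto; apply Hp).
      assert (F2 : 0 <= F I2 (snd p)) by (eapply HF_Fnn; eauto; apply Hp).
      assert (Ek1 : eps * kappa I1 I1 <= / 4).
      { apply Rle_trans with (/ (4 * K) * K).
        - apply Rmult_le_compat; try lra. pose proof (Hk I1 I1); lra. unfold K.
          pose proof (Hk I1 I2); pose proof (Hk I2 I1); pose proof (Hk I2 I2); lra.
        - right; field; lra. }
      assert (Ek2 : eps * kappa I2 I2 <= / 4).
      { apply Rle_trans with (/ (4 * K) * K).
        - apply Rmult_le_compat; try lra. pose proof (Hk I2 I2); lra. unfold K.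
          pose proof (Hk I1 I2); pose proof (Hk I2 I1); pose proof (Hk I1 I1); lra.
        - right; field; lra. }
      unfold Feps. split.
      * assert (- (eps * h p) <= eps * (kappa I1 I1 * F I1 (fst p) + kappa I2 I2 * F I2 (snd p)) / 2) by nra.
        nra.
      * assert (eps * h p <= eps * (kappa I1 I1 * F I1 (fst p) + kappa I2 I2 * F I2 (snd p)) / 2) by nra.
        nra.
  - intros j r Hr. apply (part3 _ _ _ _ _ _ _ (HF j)); auto.
  - intros j. apply (part4 _ _ _ _ _ _ _ (HF j)).
  - intros H HH.
    destruct (part5_ij F dF d2F m M beta r0 dh Th kappa I1 I1 H HF HT HH) as [b11 [Hb11 P11]].
    destruct (part5_ij F dF d2F m M beta r0 dh Th kappa I1 I2 H HF HT HH) as [b12 [Hb12 P12]].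
    destruct (part5_ij F dF d2F m M beta r0 dh Th kappa I2 I1 H HF HT HH) as [b21 [Hb21 P21]].
    destruct (part5_ij F dF d2F m M beta r0 dh Th kappa I2 I2 H HF HT HH) as [b22 [Hb22 P22]].
    exists (b11 + b12 + b21 + b22). split; [lra|].
    intros rb r i j Hrb H1 H2 Hr.
    assert (Hd : 0 <= bregman (F I1) (dF I1) (fst r) (fst rb) + bregman (F I2) (dF I2) (snd r) (snd rb)).
    { destruct Hrb, Hr. pose proof (breg_nn _ _ _ _ _ _ _ (HF I1) (fst r) (fst rb)).
      pose proof (breg_nn _ _ _ _ _ _ _ (HF I2) (snd r) (snd rb)). lra. }
    destruct j, i.
    + pose proof (P11 rb r Hrb H1 H2 Hr). nra.
    + pose proof (P12 rb r Hrb H1 H2 Hr). nra.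
    + pose proof (P21 rb r Hrb H1 H2 Hr). nra.
    + pose proof (P22 rb r Hrb H1 H2 Hr). nra.
Qed.
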